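(* Let $M\ge3$, $N\ge3$ and let $\phi\in\{0,1\}^{E(\mathbb{L}_1)}$ be a primal contour configuration. Assume that $\partial B^*_{M,N}$ crosses present edges of $\mathbb{L}_1$ an even number of times. Then one can change the states of the edges of $B_{M-1,N-1}$ (leaving all other edges unchanged) in such a way that in the resulting configuration all present edges of $\mathbb{L}_1$ crossing $\partial B^*_{M,N}$ belong to the same contour, and each vertex of $B_{M-1,N-1}$ has an even number of incident present edges.
   Context: Let $\mathbb{L}_1$ be the graph with vertices $(m-\tfrac12,n+\tfrac12)$, $m,n$ both even, and $\mathbb{L}_2$ the graph with vertices $(m-\tfrac12,n+\tfrac12)$, $m,n$ both odd; in each, two vertices are joined by an edge iff at Euclidean distance $2$; faces of each are squares of side $2$. A primal contour configuration is $\phi\in\{0,1\}^{E(\mathbb{L}_1)}$ in which every vertex of $\mathbb{L}_1$ has an even number of incident present edges (edges with value $1$); a contour is a connected component of the set of present edges. Boxes of $\mathbb{L}_2$: $B^*_{1,1}$ is the face of $\mathbb{L}_2$ containing the origin; for $n$ odd (resp. even), $B^*_{m,n+1}$ is obtained from $B^*_{m,n}$ by adding a column of $m$ faces of $\mathbb{L}_2$ to its right (resp. left); for $m$ odd (resp. even), $B^*_{m+1,n}$ is obtained from $B^*_{m,n}$ by adding a row of $n$ faces of $\mathbb{L}_2$ at its bottom (resp. top). Thus $B^*_{M,N}$ is a rectangle of $M$ rows and $N$ columns of faces of $\mathbb{L}_2$, with boundary $\partial B^*_{M,N}$. $B_{M-1,N-1}$ denotes the subgraph of $\mathbb{L}_1$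 enclosed by $\partial B^*_{M,N}$ (the vertices of $\mathbb{L}_1$ in the interior of the rectangle and the edges of $\mathbb{L}_1$ joining two of them). An edge of $\mathbb{L}_1$ crosses $\partial B^*_{M,N}$ if it joins a vertex inside to a vertex outside the rectangle. *)

(* Defs.v *)
From Stdlib Require Import ZArith List Relations.
Open Scope Z_scope.

(* The vertex (a,b) : Z*Z of L1 is the point (2a - 1/2, 2b + 1/2), i.e. (m - 1/2, n + 1/2)
   with m = 2a, n = 2b both even.  Two L1-vertices are at distance 2 iff
   their indices differ by a unit vector, so the edges of L1 are
     EH a b : between (a,b) and (a+1,b)   (horizontal)
     EV a b : between (a,b) and (a,b+1)   (vertical).
   The vertices of L2 are the points (2c + 1/2, 2r + 3/2) (m = 2c+1,
   n = 2r+1 odd).  Each face of L2 is a 2x2 square whose centre is a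
   vertex of L1; we index the face of L2 by the L1-vertex (a,b) at its
   centre: it is the square [2a-3/2, 2a+1/2] x [2b-1/2, 2b+3/2].
   The face containing the origin is the one indexed by (0,0).
   --------------------------------------------------------------------- *)

Definition vtx : Type := (Z * Z)%type.

Inductive edge : Type :=
| EH (a b : Z)
| EV (a b : Z).

Definition ends (e : edge) : vtx * vtx :=
  match e with
  | EH a b => ((a, b), (a + 1, b))
  | EV a b => ((a, b), (a, b + 1))
  end.

Definition incident (v : vtx) (e : edge) : Prop :=
  fst (ends e) = v \/ snd (ends e) = v.

(* A configuration phi in {0,1}^{E(L1)} (true = present). *)
Definition config : Type := edge -> bool.

Definition deg (phi : config) (v : vtx) : nat :=
  let (a, b) := v in
  Nat.b2n (phi (EH a b)) + Nat.b2n (phi (EH (a - 1) b))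
  + Nat.b2n (phi (EV a b)) + Nat.b2n (phi (EV a (b - 1))).

Definition even_at (phi : config) (v : vtx) : Prop := Nat.Even (deg phi v).

Definition contour_config (phi : config) : Prop := forall v, even_at phi v.

(* Two present edges sharing an endpoint are adjacent; a contour is a
   connected component of the set of present edges, so two present edges
   lie in the same contour iff they are related by the reflexive-transitive
   closure of this adjacency. *)
Definition adj (phi : config) (e f : edge) : Prop :=
  phi e = true /\ phi f = true /\ exists v, incident v e /\ incident v f.

Definition same_contour (phi : config) (e f : edge) : Prop :=
  phi e = true /\ phi f = true /\ clos_refl_trans edge (adj phi) e f.

(* ---------------------------------------------------------------------
   Boxes B*_{m,n}.  cols k = (lo, hi) is the range of column indices of
   B*_{m,k+1} (which has k+1 columns): B*_{m,1} has the single column 0;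
   passing from n columns to n+1 we add a column on the right if n is odd
   and on the left if n is even.
   rows k = (lo, hi) is the range of row indices of B*_{k+1,n}: passing
   from m rows to m+1 we add a row at the bottom (lower index) if m is odd
   and at the top if m is even.
   --------------------------------------------------------------------- *)
Fixpoint cols (k : nat) : Z * Z :=
  match k with
  | O => (0, 0)
  | S k' => let (lo, hi) := cols k' in
            if Nat.odd (S k') then (lo, hi + 1) else (lo - 1, hi)
  end.

Fixpoint rows (k : nat) : Z * Z :=
  match k with
  | O => (0, 0)
  | S k' => let (lo, hi) := rows k' in
            if Nat.odd (S k') then (lo - 1, hi) else (lo, hi + 1)
  end.

(* B*_{M,N} is the union of the faces of L2 indexed by (a,b) with
   a in the column range and b in the row range (M rows, N columns,
   M, N >= 1).  A vertex of L1 lies in the interior of the rectangle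
   B*_{M,N} iff it is the centre of one of these faces (the other vertices
   of L1 are centres of faces outside the rectangle, hence outside it). *)
Definition inside (M N : nat) (v : vtx) : Prop :=
  let (a, b) := v in
  fst (cols (N - 1)) <= a <= snd (cols (N - 1)) /\
  fst (rows (M - 1)) <= b <= snd (rows (M - 1)).

Definition box_edge (M N : nat) (e : edge) : Prop :=
  inside M N (fst (ends e)) /\ inside M N (snd (ends e)).

Definition crosses (M N : nat) (e : edge) : Prop :=
  (inside M N (fst (ends e)) /\ ~ inside M N (snd (ends e))) \/
  (~ inside M N (fst (ends e)) /\ inside M N (snd (ends e))).

(* Main.v *)
Require Import Defs.
From Stdlib Require Import ZArith List Relations Lia Bool Arith NArith Btauto Setoid.
Import ListNotations.
Open Scope Z_scope.


Fixpoint zsum (f : Z -> nat) (lo : Z) (n : nat) : nat :=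
  match n with O => 0%nat | S n' => (f lo + zsum f (lo + 1) n')%nat end.

Lemma zsum_ext f g lo n :
  (forall z, lo <= z < lo + Z.of_nat n -> f z = g z) -> zsum f lo n = zsum g lo n.
Proof.
  revert lo; induction n as [|n IH]; intros lo H; simpl; auto.
  rewrite (H lo) by lia. rewrite (IH (lo+1)); auto. intros z Hz; apply H; lia.
Qed.

Lemma zsum_last f lo n : zsum f lo (S n) = Nat.add (zsum f lo n) (f (lo + Z.of_nat n)).
Proof.
  revert lo; induction n as [|n IH]; intros lo; simpl.
  - rewrite Z.add_0_r; lia.
  - simpl in IH. rewrite IH. replace (lo + 1 + Z.of_nat n) with (lo + Z.pos (Pos.of_succ_nat n)) by lia. lia.
Qed.

Lemma zsum_pos f lo n : (zsum f lo n <> 0)%nat -> exists z, lo <= z < lo + Z.of_nat n /\ f z <> 0%nat.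
Proof.
  revert lo; induction n as [|n IH]; intros lo H; simpl in *.
  - lia.
  - destruct (Nat.eq_dec (f lo) 0) as [E|E].
    + destruct (IH (lo+1)) as [z [Hz1 Hz2]]; [lia|]. exists z; split; [lia|auto].
    + exists lo; split; [lia|auto].
Qed.

Definition insR (A0 B0 : Z) (p q : nat) (v : vtx) : Prop :=
  let (a, b) := v in A0 <= a <= A0 + Z.of_nat p /\ B0 <= b <= B0 + Z.of_nat q.
Definition boxR A0 B0 p q (e : edge) : Prop :=
  insR A0 B0 p q (fst (ends e)) /\ insR A0 B0 p q (snd (ends e)).
Definition crR A0 B0 p q (e : edge) : Prop :=
  (insR A0 B0 p q (fst (ends e)) /\ ~ insR A0 B0 p q (snd (ends e))) \/
  (~ insR A0 B0 p q (fst (ends e)) /\ insR A0 B0 p q (snd (ends e))).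

Definition Tc (phi : config) A0 B0 (p q : nat) : nat :=
  (zsum (fun b => Nat.b2n (phi (EH (A0 - 1) b))) B0 (S q) +
   zsum (fun b => Nat.b2n (phi (EH (A0 + Z.of_nat p) b))) B0 (S q) +
   zsum (fun a => Nat.b2n (phi (EV a (B0 - 1)))) A0 (S p) +
   zsum (fun a => Nat.b2n (phi (EV a (B0 + Z.of_nat q)))) A0 (S p))%nat.

Definition GoodR A0 B0 p q : Prop :=
  forall phi : config, Nat.Even (Tc phi A0 B0 p q) ->
  exists psi : config,
    (forall e, ~ boxR A0 B0 p q e -> psi e = phi e) /\
    (forall e f, crR A0 B0 p q e -> crR A0 B0 p q f ->
                 psi e = true -> psi f = true -> same_contour psi e f) /\
    (forall v, insR A0 B0 p q v -> even_at psi v).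

Lemma adj_sym psi e f : adj psi e f -> adj psi f e.
Proof. intros [H1 [H2 [v [H3 H4]]]]. repeat split; auto. exists v; auto. Qed.

Lemma crt_sym psi e f : clos_refl_trans edge (adj psi) e f -> clos_refl_trans edge (adj psi) f e.
Proof.
  induction 1.
  - apply rt_step, adj_sym; auto.
  - apply rt_refl.
  - eapply rt_trans; eauto.
Qed.

Lemma crt_map (R1 R2 : edge -> edge -> Prop) (g : edge -> edge) :
  (forall x y, R1 x y -> R2 (g x) (g y)) ->
  forall x y, clos_refl_trans edge R1 x y -> clos_refl_trans edge R2 (g x) (g y).
Proof.
  intros H x y C; induction C.
  - apply rt_step; auto.
  - apply rt_refl.
  - eapply rt_trans; eauto.
Qed.

Lemma adj_step psi e f v : psi e = true -> psi f = true -> incident v e -> incident v f ->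
  clos_refl_trans edge (adj psi) e f.
Proof. intros; apply rt_step; repeat split; auto; exists v; auto. Qed.

Lemma even_iff x y : Nat.even x = Nat.even y -> (Nat.Even x <-> Nat.Even y).
Proof. intros H. rewrite <- !Nat.even_spec. rewrite H. tauto. Qed.


Definition tr (e : edge) : edge := match e with EH a b => EV b a | EV a b => EH b a end.
Lemma tr_tr e : tr (tr e) = e. Proof. destruct e; reflexivity. Qed.

Lemma box_tr A0 B0 p q e : boxR B0 A0 q p e <-> boxR A0 B0 p q (tr e).
Proof. destruct e; unfold boxR, insR; simpl; tauto. Qed.
Lemma cr_tr A0 B0 p q e : crR B0 A0 q p e <-> crR A0 B0 p q (tr e).
Proof. destruct e; unfold crR, insR; simpl; tauto. Qed.

Lemma inc_tr v e : incident v e -> incident (snd v, fst v) (tr e).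
Proof. destruct v as [x y]; destruct e; unfold incident; simpl; intros [H|H]; inversion H; subst; auto. Qed.

Lemma good_tr A0 B0 p q : GoodR A0 B0 p q -> GoodR B0 A0 q p.
Proof.
  intros G phi HT.
  destruct (G (fun e => phi (tr e))) as [psi0 [H1 [H2 H3]]].
  { unfold Tc in *; simpl in *. revert HT. apply even_iff. f_equal. lia. }
  exists (fun e => psi0 (tr e)). split; [|split].
  - intros e He. rewrite H1, tr_tr; auto. rewrite <- box_tr; auto.
  - intros e f He Hf Pe Pf. assert (C0 : same_contour psi0 (tr e) (tr f)) by (apply H2; try (rewrite <- cr_tr; assumption); assumption).
    destruct C0 as [_ [_ C]]. unfold same_contour.
    split; [auto|split; [auto|]].
    rewrite <- (tr_tr e), <- (tr_tr f).
    revert C; apply crt_map.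
    intros x y [A [B [v [I1 I2]]]]. repeat split; rewrite ?tr_tr; auto.
    exists (snd v, fst v); split; apply inc_tr; auto.
  - intros [x y] Hv. specialize (H3 (y, x)). unfold even_at, deg in *.
    simpl. revert H3. unfold insR in *. intros H3.
    assert (E := H3 ltac:(tauto)). revert E. apply even_iff. f_equal. lia.
Qed.

Definition sh (x y : Z) (e : edge) : edge :=
  match e with EH a b => EH (a + x) (b + y) | EV a b => EV (a + x) (b + y) end.
Lemma sh_sh x y e : sh (-x) (-y) (sh x y e) = e.
Proof. destruct e; simpl; f_equal; lia. Qed.
Lemma sh_sh' x y e : sh x y (sh (-x) (-y) e) = e.
Proof. destruct e; simpl; f_equal; lia. Qed.

Lemma zsum_sh f lo n x : zsum f (lo + x) n = zsum (fun z => f (z + x)) lo n.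
Proof.
  revert lo; induction n as [|n IH]; intros lo; simpl; auto.
  rewrite <- IH. replace (lo + 1 + x) with (lo + x + 1) by lia. reflexivity.
Qed.

Lemma ins_sh A0 B0 p q x y a b : insR (A0 + x) (B0 + y) p q (a, b) <-> insR A0 B0 p q (a - x, b - y).
Proof. unfold insR; split; intros; lia. Qed.

Lemma box_sh A0 B0 p q x y e : boxR (A0 + x) (B0 + y) p q e <-> boxR A0 B0 p q (sh (-x) (-y) e).
Proof. destruct e; unfold boxR, insR; simpl; split; intros; lia. Qed.
Lemma cr_sh A0 B0 p q x y e : crR (A0 + x) (B0 + y) p q e <-> crR A0 B0 p q (sh (-x) (-y) e).
Proof. destruct e; unfold crR, insR; simpl; split; intros; lia. Qed.

Lemma inc_sh x y v e : incident v e -> incident (fst v + x, snd v + y) (sh x y e).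
Proof.
  destruct v as [a b]; destruct e; unfold incident; simpl; intros [H|H]; inversion H; subst;
  [left|right|left|right]; f_equal; lia.
Qed.

Lemma good_sh A0 B0 p q x y : GoodR A0 B0 p q -> GoodR (A0 + x) (B0 + y) p q.
Proof.
  intros G phi HT.
  destruct (G (fun e => phi (sh x y e))) as [psi0 [H1 [H2 H3]]].
  { unfold Tc in *. revert HT. apply even_iff. f_equal.
    rewrite !zsum_sh.
    f_equal; [f_equal; [f_equal|]|]; apply zsum_ext; intros z Hz; simpl;
      do 3 f_equal; lia. }
  exists (fun e => psi0 (sh (-x) (-y) e)). split; [|split].
  - intros e He. rewrite H1, sh_sh'; auto. rewrite <- box_sh; auto.
  - intros e f He Hf Pe Pf. assert (C0 : same_contour psi0 (sh (-x) (-y) e) (sh (-x) (-y) f)) by (apply H2; try (rewrite <- cr_sh; assumption); assumption).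
    destruct C0 as [_ [_ C]]. unfold same_contour.
    split; [auto|split; [auto|]].
    rewrite <- (sh_sh' x y e), <- (sh_sh' x y f).
    revert C; apply crt_map.
    intros u w [A [B [v [I1 I2]]]]. repeat split; rewrite ?sh_sh; auto.
    exists (fst v + x, snd v + y); split; apply inc_sh; auto.
  - intros [a b] Hv. specialize (H3 (a - x, b - y)). unfold even_at, deg in *.
    rewrite ins_sh in Hv.
    assert (E := H3 Hv). revert E. apply even_iff. f_equal. simpl.
    repeat match goal with |- context [sh (-x) (-y) ?e] =>
      let t := eval simpl in (sh (-x) (-y) e) in change (sh (-x) (-y) e) with t end.
    replace (a + - x) with (a - x) by lia; replace (b + - y) with (b - y) by lia;
    replace (a - 1 + - x) with (a - x - 1) by lia; replace (b - 1 + - y) with (b - y - 1) by lia;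
    reflexivity.
Qed.


Ltac zcase := repeat match goal with
 | |- context [Z.eqb ?x ?y] => destruct (Z.eqb_spec x y)
 | |- context [Z.leb ?x ?y] => destruct (Z.leb_spec x y)
 | |- context [Z.ltb ?x ?y] => destruct (Z.ltb_spec x y)
 end; simpl; try (exfalso; lia); try reflexivity.

Definition Gc (phi : config) (A1 B0 B1 : Z) (fV : bool) (b : Z) : bool :=
  if b =? B0 then xorb (xorb (phi (EH A1 B0)) (phi (EV A1 (B0 - 1)))) fV
  else if b =? B1 then xorb (xorb (phi (EH A1 B1)) (phi (EV A1 B1))) fV
  else phi (EH A1 b).

Definition phic (phi : config) (A1 B0 B1 : Z) (fV : bool) (e : edge) : bool :=
  match e with
  | EH a b => if (a =? A1 - 1) && (B0 <=? b) && (b <=? B1) then Gc phi A1 B0 B1 fV b else phi e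
  | EV a b => if (a =? A1) && (B0 <=? b) && (b <? B1) then fV else phi e
  end.

Lemma zsum_split3 f lo n : zsum f lo (S (S n)) = (f lo + zsum f (lo + 1) n + f (lo + 1 + Z.of_nat n)%Z)%nat.
Proof. change (zsum f lo (S (S n))) with (f lo + zsum f (lo + 1) (S n))%nat. rewrite zsum_last. lia. Qed.

Lemma zsum_zero f lo n : zsum f lo n = 0%nat -> forall z, lo <= z < lo + Z.of_nat n -> f z = 0%nat.
Proof.
  revert lo; induction n as [|n IH]; intros lo H z Hz; simpl in *; [lia|].
  destruct (Z.eq_dec z lo); [subst; lia|]. apply (IH (lo+1)); lia.
Qed.

Lemma vchain (psi : config) A1 B0 B1 :
  (forall j, B0 <= j <= B1 - 1 -> psi (EV A1 j) = true) ->
  forall n j, B0 <= j -> j + Z.of_nat n <= B1 - 1 ->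
  clos_refl_trans edge (adj psi) (EV A1 j) (EV A1 (j + Z.of_nat n)).
Proof.
  intros HP n; induction n as [|n IH]; intros j H1 H2.
  - rewrite Z.add_0_r; apply rt_refl.
  - eapply rt_trans; [apply IH; lia|].
    apply adj_step with (v := (A1, j + Z.of_nat n + 1)).
    + apply HP; lia.
    + apply HP; lia.
    + right; simpl; reflexivity.
    + left; simpl; f_equal; lia.
Qed.

Lemma vchain2 (psi : config) A1 B0 B1 :
  (forall j, B0 <= j <= B1 - 1 -> psi (EV A1 j) = true) ->
  forall j1 j2, B0 <= j1 <= B1 - 1 -> B0 <= j2 <= B1 - 1 ->
  clos_refl_trans edge (adj psi) (EV A1 j1) (EV A1 j2).
Proof.
  intros HP j1 j2 H1 H2.
  destruct (Z.le_gt_cases j1 j2).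
  - replace j2 with (j1 + Z.of_nat (Z.to_nat (j2 - j1))) by lia.
    apply (vchain psi A1 B0 B1); auto; lia.
  - apply crt_sym.
    replace j1 with (j2 + Z.of_nat (Z.to_nat (j1 - j2))) by lia.
    apply (vchain psi A1 B0 B1); auto; lia.
Qed.


Lemma par_lemma (L Bo To Mid : nat) (r0 d u r1 f : bool) :
  Nat.even (L + (Nat.b2n r0 + Mid + Nat.b2n r1) + (Bo + Nat.b2n d) + (To + Nat.b2n u)) =
  Nat.even (L + (Nat.b2n (xorb (xorb r0 d) f) + Mid + Nat.b2n (xorb (xorb r1 u) f)) + Bo + To).
Proof.
  rewrite !Nat.even_add.
  destruct r0, d, u, r1, f; simpl;
  destruct (Nat.even L), (Nat.even Mid), (Nat.even Bo), (Nat.even To); reflexivity.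
Qed.

Lemma peel_col A0 B0 p q : (2 <= p)%nat -> (2 <= q)%nat -> GoodR A0 B0 p q -> GoodR A0 B0 (S p) q.
Proof.
  intros Hp Hq GR phi HT.
  set (A1 := A0 + Z.of_nat (S p)) in *.
  assert (HA1 : A1 = A0 + Z.of_nat p + 1) by (unfold A1; lia). clearbody A1.
  set (B1 := B0 + Z.of_nat q) in *.
  assert (HB1 : B1 = B0 + Z.of_nat q) by (unfold B1; lia). clearbody B1.
  remember (negb (Nat.eqb (zsum (fun b => Nat.b2n (phi (EH A1 b))) (B0 + 1) (q - 1)) 0
             && xorb (phi (EH A1 B0)) (phi (EV A1 (B0 - 1)))
             && xorb (phi (EH A1 B1)) (phi (EV A1 B1)))) as fV eqn:HfV.
  set (phi' := phic phi A1 B0 B1 fV).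
  assert (HT' : Nat.Even (Tc phi' A0 B0 p q)).
  { revert HT. unfold Tc. apply even_iff.
    replace (A0 + Z.of_nat (S p)) with A1 by lia. rewrite <- HB1.
    rewrite (zsum_ext (fun b => Nat.b2n (phi' (EH (A0 - 1) b))) (fun b => Nat.b2n (phi (EH (A0 - 1) b))))
      by (intros z Hz; unfold phi', phic; zcase).
    rewrite (zsum_ext (fun b => Nat.b2n (phi' (EH (A0 + Z.of_nat p) b))) (fun b => Nat.b2n (Gc phi A1 B0 B1 fV b)))
      by (intros z Hz; unfold phi', phic; zcase).
    rewrite (zsum_ext (fun a => Nat.b2n (phi' (EV a (B0 - 1)))) (fun a => Nat.b2n (phi (EV a (B0 - 1)))))
      by (intros z Hz; unfold phi', phic; zcase).
    rewrite (zsum_ext (fun a => Nat.b2n (phi' (EV a B1))) (fun a => Nat.b2n (phi (EV a B1))))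
      by (intros z Hz; unfold phi', phic; zcase).
    rewrite (zsum_last (fun a => Nat.b2n (phi (EV a (B0 - 1)))) A0 (S p)).
    rewrite (zsum_last (fun a => Nat.b2n (phi (EV a B1))) A0 (S p)).
    replace (A0 + Z.of_nat (S p)) with A1 by lia.
    replace (S q) with (S (S (q - 1))) by lia.
    rewrite !zsum_split3.
    replace (B0 + 1 + Z.of_nat (q - 1)) with B1 by lia.
    rewrite (zsum_ext (fun b => Nat.b2n (Gc phi A1 B0 B1 fV b)) (fun b => Nat.b2n (phi (EH A1 b))) (B0 + 1))
      by (intros z Hz; unfold Gc; zcase).
    assert (G0 : Gc phi A1 B0 B1 fV B0 = xorb (xorb (phi (EH A1 B0)) (phi (EV A1 (B0 - 1)))) fV)
      by (unfold Gc; zcase).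
    assert (G1 : Gc phi A1 B0 B1 fV B1 = xorb (xorb (phi (EH A1 B1)) (phi (EV A1 B1))) fV)
      by (unfold Gc; zcase).
    rewrite G0, G1. symmetry. apply par_lemma. }
  destruct (GR phi' HT') as [psi [P1 [P2 P3]]].
  assert (Hout : forall e b, incident (A1, b) e -> psi e = phi' e).
  { intros e b Hi. apply P1. intros [H1 H2]. destruct e; unfold incident in Hi; simpl in *;
    destruct Hi as [E|E]; inversion E; subst; unfold insR in *; lia. }
  assert (HV : fV = true -> forall j, B0 <= j <= B1 - 1 -> psi (EV A1 j) = true).
  { intros Hf j Hj. rewrite (Hout (EV A1 j) j) by (left; reflexivity).
    unfold phi', phic; zcase; auto. }
  assert (Hcol : forall b0 e, B0 <= b0 <= B1 -> incident (A1, b0) e -> psi e = true ->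
     (e = EH A1 b0 \/ (b0 = B0 /\ e = EV A1 (B0 - 1)) \/ (b0 = B1 /\ e = EV A1 B1)) ->
     exists g, crR A0 B0 p q g /\ psi g = true /\ clos_refl_trans edge (adj psi) e g).
  { intros b0 e Hb0 Hi Pe Hform.
    assert (Pe' : phi e = true).
    { rewrite (Hout e b0 Hi) in Pe. revert Pe.
      destruct Hform as [E|[[E1 E]|[E1 E]]]; subst e; unfold phi', phic; zcase; auto. }
    destruct fV eqn:EfV.
    - assert (Anc : exists bs, B0 <= bs <= B1 /\ Gc phi A1 B0 B1 true bs = true).
      { destruct (Nat.eq_dec (zsum (fun b => Nat.b2n (phi (EH A1 b))) (B0 + 1) (q - 1)) 0) as [Z0|Z0].
        - rewrite Z0 in HfV. simpl in HfV.
          destruct (xorb (phi (EH A1 B0)) (phi (EV A1 (B0 - 1)))) eqn:X0.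
          + exists B1. split; [lia|]. unfold Gc; zcase.
            destruct (xorb (phi (EH A1 B1)) (phi (EV A1 B1))); simpl in *; auto.
          + exists B0. split; [lia|]. unfold Gc; zcase. rewrite X0; reflexivity.
        - destruct (zsum_pos _ _ _ Z0) as [z [Hz1 Hz2]]. exists z. split; [lia|].
          unfold Gc; zcase. destruct (phi (EH A1 z)); simpl in Hz2; auto; lia. }
      destruct Anc as [bs [Hbs Gbs]].
      exists (EH (A1 - 1) bs). split; [|split].
      + unfold crR, insR; simpl; lia.
      + rewrite (Hout _ bs) by (right; simpl; f_equal; lia).
        unfold phi', phic; zcase. exact Gbs.
      + assert (Pg : psi (EH (A1 - 1) bs) = true).
        { rewrite (Hout _ bs) by (right; simpl; f_equal; lia).
          unfold phi', phic; zcase. exact Gbs. }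
        eapply rt_trans.
        { apply adj_step with (v := (A1, b0)) (f := EV A1 (Z.min b0 (B1 - 1))); auto.
          - apply HV; auto; lia.
          - unfold incident; destruct (Z.eq_dec b0 B1); [right|left]; simpl; f_equal; lia. }
        apply rt_trans with (y := EV A1 (Z.min bs (B1 - 1))).
        { apply (vchain2 psi A1 B0 B1 (HV eq_refl)); lia. }
        apply adj_step with (v := (A1, bs)); auto.
        * apply HV; auto; lia.
        * unfold incident; destruct (Z.eq_dec bs B1); [right|left]; simpl; f_equal; lia.
        * right; simpl; f_equal; lia.
    - symmetry in HfV. apply negb_false_iff in HfV.
      apply andb_prop in HfV as [HfV X1]. apply andb_prop in HfV as [M0 X0].
      apply Nat.eqb_eq in M0.
      assert (Hb : b0 = B0 \/ b0 = B1).
      { destruct Hform as [E|[[E1 E]|[E1 E]]]; auto. subst e.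
        destruct (Z.eq_dec b0 B0); auto. destruct (Z.eq_dec b0 B1); auto.
        exfalso. assert (Z1 := zsum_zero _ _ _ M0 b0 ltac:(lia)). simpl in Z1.
        rewrite Pe' in Z1. discriminate. }
      exists (EH (A1 - 1) b0).
      assert (Pg : psi (EH (A1 - 1) b0) = true).
      { rewrite (Hout _ b0) by (right; simpl; f_equal; lia).
        unfold phi', phic, Gc; zcase; destruct Hb; subst; try (exfalso; lia);
        rewrite ?X0, ?X1; auto. }
      split; [|split]; auto.
      + unfold crR, insR; simpl; lia.
      + apply adj_step with (v := (A1, b0)); auto.
        right; simpl; f_equal; lia.
  }
  assert (Hanc : forall e, crR A0 B0 (S p) q e -> psi e = true ->
     exists g, crR A0 B0 p q g /\ psi g = true /\ clos_refl_trans edge (adj psi) e g).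
  { intros e He Pe. destruct e as [a b|a b]; unfold crR, insR in He; simpl in He.
    - destruct (Z.eq_dec a A1).
      + subst a. apply (Hcol b); [lia | left; reflexivity | exact Pe | left; reflexivity].
      + exists (EH a b); split; [unfold crR, insR; simpl; lia | split; [auto | apply rt_refl]].
    - destruct (Z.eq_dec a A1).
      + subst a. destruct (Z.eq_dec b (B0 - 1)).
        * subst b. apply (Hcol B0); [lia | right; simpl; f_equal; lia | exact Pe | right; left; auto].
        * assert (b = B1) by lia. subst b. apply (Hcol B1); [lia | left; reflexivity | exact Pe | right; right; auto].
      + exists (EV a b); split; [unfold crR, insR; simpl; lia | split; [auto | apply rt_refl]]. }
  exists psi. split; [|split].
  - intros e He. assert (Hb' : ~ boxR A0 B0 p q e)
      by (intro Hb; apply He; destruct e; unfold boxR, insR in *; simpl in *; lia).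
    rewrite (P1 e Hb'). unfold phi', phic. destruct e as [a b|a b].
    + destruct ((a =? A1 - 1) && (B0 <=? b) && (b <=? B1)) eqn:C; auto.
      exfalso; apply He. rewrite !andb_true_iff, Z.eqb_eq, !Z.leb_le in C.
      unfold boxR, insR; simpl; lia.
    + destruct ((a =? A1) && (B0 <=? b) && (b <? B1)) eqn:C; auto.
      exfalso; apply He. rewrite !andb_true_iff, Z.eqb_eq, Z.leb_le, Z.ltb_lt in C.
      unfold boxR, insR; simpl; lia.
  - intros e f He Hf Pe Pf.
    destruct (Hanc e He Pe) as [g1 [Cg1 [Pg1 R1]]].
    destruct (Hanc f Hf Pf) as [g2 [Cg2 [Pg2 R2]]].
    destruct (P2 g1 g2 Cg1 Cg2 Pg1 Pg2) as [_ [_ R]].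
    unfold same_contour; repeat split; auto.
    eapply rt_trans; [exact R1|]. eapply rt_trans; [exact R|]. apply crt_sym; exact R2.
  - intros [a b] Hv. destruct (Z.le_gt_cases a (A1 - 1)) as [Ha|Ha].
    + apply P3. unfold insR in *; lia.
    + assert (a = A1) by (unfold insR in Hv; lia). subst a. unfold even_at, deg.
      unfold insR in Hv.
      rewrite (Hout (EH A1 b) b) by (left; reflexivity).
      rewrite (Hout (EH (A1 - 1) b) b) by (right; simpl; f_equal; lia).
      rewrite (Hout (EV A1 b) b) by (left; reflexivity).
      rewrite (Hout (EV A1 (b - 1)) b) by (right; simpl; f_equal; lia).
      unfold phi', phic, Gc. zcase; try (match goal with H : b = _ |- _ => subst b end);
      repeat match goal with |- context [phi ?e] => destruct (phi e) end;
      destruct fV; simpl; apply Nat.even_spec; reflexivity.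
Qed.


Definition ledges : list edge := [EH 0 0; EH 0 1; EH 0 2; EH 1 0; EH 1 1; EH 1 2; EV 0 0; EV 0 1; EV 1 0; EV 1 1; EV 2 0; EV 2 1; EH (-1) 0; EH (-1) 1; EH (-1) 2; EH 2 0; EH 2 1; EH 2 2; EV 0 (-1); EV 1 (-1); EV 2 (-1); EV 0 2; EV 1 2; EV 2 2].
Definition vinc : list (list nat) := ([[0; 12; 6; 18]; [1; 13; 7; 6]; [2; 14; 21; 7]; [3; 0; 8; 19]; [4; 1; 9; 8]; [5; 2; 22; 9]; [15; 3; 10; 20]; [16; 4; 11; 10]; [17; 5; 23; 11]])%nat.
Definition table : list N := [0%N; 0%N; 0%N; 64%N; 0%N; 192%N; 128%N; 0%N; 0%N; 9%N; 73%N; 0%N; 201%N; 0%N; 0%N; 458%N; 0%N; 82%N; 18%N; 0%N; 146%N; 0%N; 0%N; 210%N; 91%N; 0%N; 0%N; 990%N; 0%N; 862%N; 219%N; 0%N; 0%N; 228%N; 164%N; 0%N; 36%N; 0%N; 0%N; 738%N; 237%N; 0%N; 0%N; 494%N; 0%N; 1971%N; 747%N; 0%N; 182%N; 0%N; 0%N; 246%N; 0%N; 947%N; 1011%N; 0%N; 0%N; 890%N; 255%N; 0%N; 954%N; 0%N; 0%N; 1018%N; 0%N; 0%N; 64%N; 0%N; 192%N; 0%N; 0%N; 451%N; 9%N; 0%N; 0%N; 73%N; 0%N; 201%N; 458%N; 0%N; 82%N; 0%N; 0%N; 337%N; 0%N; 465%N; 210%N; 0%N; 0%N; 91%N; 990%N;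 0%N; 862%N; 0%N; 0%N; 219%N; 228%N; 0%N; 0%N; 487%N; 0%N; 993%N; 738%N; 0%N; 0%N; 237%N; 494%N; 0%N; 1971%N; 0%N; 0%N; 747%N; 0%N; 501%N; 246%N; 0%N; 947%N; 0%N; 0%N; 1011%N; 890%N; 0%N; 0%N; 255%N; 0%N; 3537%N; 1018%N; 0%N; 0%N; 1%N; 65%N; 0%N; 193%N; 0%N; 0%N; 450%N; 8%N; 0%N; 0%N; 267%N; 0%N; 395%N; 459%N; 0%N; 83%N; 0%N; 0%N; 982%N; 0%N; 854%N; 211%N; 0%N; 0%N; 281%N; 345%N; 0%N; 473%N; 0%N; 0%N; 799%N; 229%N; 0%N; 0%N; 486%N; 0%N; 1979%N; 739%N; 0%N; 0%N; 431%N; 495%N; 0%N; 1001%N; 0%N; 0%N; 2034%N; 0%N; 882%N; 247%N; 0%N; 946%N; 0%N; 0%N; 1010%N; 509%N; 0%N; 0%N; 827%N; 0%N; 955%N; 1019%N; 0%N; 1%N; 0%N; 0%N; 65%N; 0%N; 193%N; 450%N; 0%N; 0%N; 331%N; 267%N; 0%N; 395%N; 0%N; 0%N; 459%N; 0%N; 83%N; 982%N; 0%N; 854%N; 0%N; 0%N; 211%N; 281%N; 0%N; 0%N; 345%N; 0%N; 473%N; 799%N; 0%N; 0%N; 229%N; 486%N; 0%N; 1979%N; 0%N; 0%N; 739%N; 431%N; 0%N; 0%N; 495%N; 0%N; 1001%N; 2034%N; 0%N; 882%N; 0%N; 0%N; 247%N; 0%N; 2025%N; 1010%N; 0%N; 0%N;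 509%N; 827%N; 0%N; 955%N; 0%N; 0%N; 1019%N; 0%N; 9%N; 73%N; 0%N; 201%N; 0%N; 0%N; 458%N; 0%N; 0%N; 0%N; 1051%N; 0%N; 1179%N; 1243%N; 0%N; 91%N; 0%N; 0%N; 990%N; 0%N; 862%N; 219%N; 0%N; 0%N; 1033%N; 1097%N; 0%N; 1225%N; 0%N; 0%N; 1482%N; 237%N; 0%N; 0%N; 494%N; 0%N; 1971%N; 747%N; 0%N; 0%N; 1215%N; 1279%N; 0%N; 1785%N; 0%N; 0%N; 2042%N; 0%N; 890%N; 255%N; 0%N; 954%N; 0%N; 0%N; 1018%N; 1261%N; 0%N; 0%N; 1518%N; 0%N; 3227%N; 1771%N; 0%N; 9%N; 0%N; 0%N; 73%N; 0%N; 201%N; 458%N; 0%N; 0%N; 1115%N; 1051%N; 0%N; 1179%N; 0%N; 0%N; 1243%N; 0%N; 91%N; 990%N; 0%N; 862%N; 0%N; 0%N; 219%N; 1033%N; 0%N; 0%N; 1097%N; 0%N; 1225%N; 1482%N; 0%N; 0%N; 237%N; 494%N; 0%N; 1971%N; 0%N; 0%N; 747%N; 1215%N; 0%N; 0%N; 1279%N; 0%N; 1785%N; 2042%N; 0%N; 890%N; 0%N; 0%N; 255%N; 0%N; 3537%N; 1018%N; 0%N; 0%N; 1261%N; 1518%N; 0%N; 3227%N; 0%N; 0%N; 1771%N; 8%N; 0%N; 0%N; 267%N; 0%N; 395%N; 459%N; 0%N; 0%N; 1114%N; 1050%N; 0%N; 1178%N; 0%N; 0%N; 1242%N; 0%N;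 281%N; 345%N; 0%N; 473%N; 0%N; 0%N; 799%N; 1032%N; 0%N; 0%N; 1291%N; 0%N; 1419%N; 1483%N; 0%N; 0%N; 431%N; 495%N; 0%N; 1001%N; 0%N; 0%N; 2034%N; 1214%N; 0%N; 0%N; 1278%N; 0%N; 1979%N; 2043%N; 0%N; 509%N; 0%N; 0%N; 827%N; 0%N; 955%N; 1019%N; 0%N; 0%N; 1455%N; 1519%N; 0%N; 2025%N; 0%N; 0%N; 3290%N; 0%N; 331%N; 267%N; 0%N; 395%N; 0%N; 0%N; 459%N; 1114%N; 0%N; 0%N; 1369%N; 0%N; 1497%N; 1242%N; 0%N; 281%N; 0%N; 0%N; 345%N; 0%N; 473%N; 799%N; 0%N; 0%N; 1355%N; 1291%N; 0%N; 1419%N; 0%N; 0%N; 1483%N; 431%N; 0%N; 0%N; 495%N; 0%N; 1001%N; 2034%N; 0%N; 0%N; 1533%N; 1278%N; 0%N; 1979%N; 0%N; 0%N; 2043%N; 0%N; 509%N; 827%N; 0%N; 955%N; 0%N; 0%N; 1019%N; 1455%N; 0%N; 0%N; 1519%N; 0%N; 2025%N; 3290%N; 0%N; 0%N; 192%N; 128%N; 0%N; 0%N; 0%N; 0%N; 710%N; 201%N; 0%N; 0%N; 458%N; 0%N; 972%N; 719%N; 0%N; 146%N; 0%N; 0%N; 210%N; 0%N; 724%N; 660%N; 0%N; 0%N; 862%N; 219%N; 0%N; 733%N; 0%N; 0%N; 990%N; 36%N; 0%N; 0%N; 738%N; 0%N; 228%N; 164%N; 0%N; 0%N; 1971%N;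 747%N; 0%N; 237%N; 0%N; 0%N; 494%N; 0%N; 947%N; 1011%N; 0%N; 182%N; 0%N; 0%N; 246%N; 954%N; 0%N; 0%N; 1018%N; 0%N; 3796%N; 255%N; 0%N; 192%N; 0%N; 0%N; 451%N; 0%N; 965%N; 710%N; 0%N; 0%N; 201%N; 458%N; 0%N; 972%N; 0%N; 0%N; 719%N; 0%N; 465%N; 210%N; 0%N; 724%N; 0%N; 0%N; 983%N; 862%N; 0%N; 0%N; 219%N; 0%N; 733%N; 990%N; 0%N; 0%N; 993%N; 738%N; 0%N; 228%N; 0%N; 0%N; 487%N; 1971%N; 0%N; 0%N; 747%N; 0%N; 237%N; 494%N; 0%N; 947%N; 0%N; 0%N; 1011%N; 0%N; 501%N; 246%N; 0%N; 0%N; 3537%N; 1018%N; 0%N; 3796%N; 0%N; 0%N; 255%N; 193%N; 0%N; 0%N; 450%N; 0%N; 964%N; 711%N; 0%N; 0%N; 395%N; 459%N; 0%N; 973%N; 0%N; 0%N; 909%N; 0%N; 854%N; 211%N; 0%N; 725%N; 0%N; 0%N; 982%N; 473%N; 0%N; 0%N; 799%N; 0%N; 927%N; 991%N; 0%N; 0%N; 1979%N; 739%N; 0%N; 229%N; 0%N; 0%N; 486%N; 1001%N; 0%N; 0%N; 2034%N; 0%N; 431%N; 495%N; 0%N; 946%N; 0%N; 0%N; 1010%N; 0%N; 1455%N; 247%N; 0%N; 0%N; 955%N; 1019%N; 0%N; 509%N; 0%N; 0%N; 4054%N; 0%N; 193%N; 450%N; 0%N; 964%N; 0%N; 0%N;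 711%N; 395%N; 0%N; 0%N; 459%N; 0%N; 973%N; 909%N; 0%N; 854%N; 0%N; 0%N; 211%N; 0%N; 725%N; 982%N; 0%N; 0%N; 473%N; 799%N; 0%N; 927%N; 0%N; 0%N; 991%N; 1979%N; 0%N; 0%N; 739%N; 0%N; 229%N; 486%N; 0%N; 0%N; 1001%N; 2034%N; 0%N; 431%N; 0%N; 0%N; 495%N; 0%N; 2025%N; 1010%N; 0%N; 1455%N; 0%N; 0%N; 247%N; 955%N; 0%N; 0%N; 1019%N; 0%N; 509%N; 4054%N; 0%N; 201%N; 0%N; 0%N; 458%N; 0%N; 972%N; 719%N; 0%N; 0%N; 1179%N; 1243%N; 0%N; 1757%N; 0%N; 0%N; 1693%N; 0%N; 862%N; 219%N; 0%N; 733%N; 0%N; 0%N; 990%N; 1225%N; 0%N; 0%N; 1482%N; 0%N; 1996%N; 1743%N; 0%N; 0%N; 1971%N; 747%N; 0%N; 237%N; 0%N; 0%N; 494%N; 1785%N; 0%N; 0%N; 2042%N; 0%N; 1215%N; 1279%N; 0%N; 954%N; 0%N; 0%N; 1018%N; 0%N; 3796%N; 255%N; 0%N; 0%N; 3227%N; 1771%N; 0%N; 1261%N; 0%N; 0%N; 1518%N; 0%N; 201%N; 458%N; 0%N; 972%N; 0%N; 0%N; 719%N; 1179%N; 0%N; 0%N; 1243%N; 0%N; 1757%N; 1693%N; 0%N; 862%N; 0%N; 0%N; 219%N; 0%N; 733%N; 990%N; 0%N; 0%N; 1225%N; 1482%N; 0%N; 1996%N; 0%N; 0%N; 1743%N;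 1971%N; 0%N; 0%N; 747%N; 0%N; 237%N; 494%N; 0%N; 0%N; 1785%N; 2042%N; 0%N; 1215%N; 0%N; 0%N; 1279%N; 0%N; 3537%N; 1018%N; 0%N; 3796%N; 0%N; 0%N; 255%N; 3227%N; 0%N; 0%N; 1771%N; 0%N; 1261%N; 1518%N; 0%N; 0%N; 395%N; 459%N; 0%N; 973%N; 0%N; 0%N; 909%N; 1178%N; 0%N; 0%N; 1242%N; 0%N; 1756%N; 1692%N; 0%N; 473%N; 0%N; 0%N; 799%N; 0%N; 927%N; 991%N; 0%N; 0%N; 1419%N; 1483%N; 0%N; 1997%N; 0%N; 0%N; 1933%N; 1001%N; 0%N; 0%N; 2034%N; 0%N; 431%N; 495%N; 0%N; 0%N; 1979%N; 2043%N; 0%N; 1214%N; 0%N; 0%N; 1278%N; 0%N; 955%N; 1019%N; 0%N; 509%N; 0%N; 0%N; 4054%N; 2025%N; 0%N; 0%N; 3290%N; 0%N; 1455%N; 1519%N; 0%N; 395%N; 0%N; 0%N; 459%N; 0%N; 973%N; 909%N; 0%N; 0%N; 1497%N; 1242%N; 0%N; 1756%N; 0%N; 0%N; 2015%N; 0%N; 473%N; 799%N; 0%N; 927%N; 0%N; 0%N; 991%N; 1419%N; 0%N; 0%N; 1483%N; 0%N; 1997%N; 1933%N; 0%N; 0%N; 1001%N; 2034%N; 0%N; 431%N; 0%N; 0%N; 495%N; 1979%N; 0%N; 0%N; 2043%N; 0%N; 1533%N; 1278%N; 0%N; 955%N; 0%N; 0%N; 1019%N; 0%N; 509%N; 4054%N;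 0%N; 0%N; 2025%N; 3290%N; 0%N; 1455%N; 0%N; 0%N; 1519%N; 0%N; 196%N; 132%N; 0%N; 4%N; 0%N; 0%N; 706%N; 205%N; 0%N; 0%N; 462%N; 0%N; 1939%N; 715%N; 0%N; 150%N; 0%N; 0%N; 214%N; 0%N; 915%N; 979%N; 0%N; 0%N; 858%N; 223%N; 0%N; 922%N; 0%N; 0%N; 986%N; 32%N; 0%N; 0%N; 742%N; 0%N; 614%N; 550%N; 0%N; 0%N; 1004%N; 751%N; 0%N; 623%N; 0%N; 0%N; 1847%N; 0%N; 756%N; 692%N; 0%N; 564%N; 0%N; 0%N; 823%N; 765%N; 0%N; 0%N; 1022%N; 0%N; 894%N; 830%N; 0%N; 196%N; 0%N; 0%N; 455%N; 0%N; 961%N; 706%N; 0%N; 0%N; 205%N; 462%N; 0%N; 1939%N; 0%N; 0%N; 715%N; 0%N; 469%N; 214%N; 0%N; 915%N; 0%N; 0%N; 979%N; 858%N; 0%N; 0%N; 223%N; 0%N; 2671%N; 986%N; 0%N; 0%N; 997%N; 742%N; 0%N; 614%N; 0%N; 0%N; 869%N; 1004%N; 0%N; 0%N; 751%N; 0%N; 623%N; 1847%N; 0%N; 756%N; 0%N; 0%N; 1015%N; 0%N; 887%N; 823%N; 0%N; 0%N; 765%N; 1022%N; 0%N; 894%N; 0%N; 0%N; 4051%N; 197%N; 0%N; 0%N; 454%N; 0%N; 1947%N; 707%N; 0%N; 0%N; 399%N; 463%N; 0%N; 969%N; 0%N; 0%N; 2002%N; 0%N; 850%N; 215%N; 0%N;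 914%N; 0%N; 0%N; 978%N; 477%N; 0%N; 0%N; 795%N; 0%N; 923%N; 987%N; 0%N; 0%N; 996%N; 743%N; 0%N; 615%N; 0%N; 0%N; 1855%N; 1005%N; 0%N; 0%N; 941%N; 0%N; 813%N; 877%N; 0%N; 757%N; 0%N; 0%N; 1014%N; 0%N; 886%N; 822%N; 0%N; 0%N; 959%N; 1023%N; 0%N; 895%N; 0%N; 0%N; 831%N; 0%N; 197%N; 454%N; 0%N; 1947%N; 0%N; 0%N; 707%N; 399%N; 0%N; 0%N; 463%N; 0%N; 969%N; 2002%N; 0%N; 850%N; 0%N; 0%N; 215%N; 0%N; 1993%N; 978%N; 0%N; 0%N; 477%N; 795%N; 0%N; 923%N; 0%N; 0%N; 987%N; 996%N; 0%N; 0%N; 743%N; 0%N; 615%N; 1855%N; 0%N; 0%N; 1005%N; 941%N; 0%N; 813%N; 0%N; 0%N; 877%N; 0%N; 757%N; 1014%N; 0%N; 886%N; 0%N; 0%N; 1901%N; 959%N; 0%N; 0%N; 1023%N; 0%N; 895%N; 831%N; 0%N; 205%N; 0%N; 0%N; 462%N; 0%N; 1939%N; 715%N; 0%N; 0%N; 1183%N; 1247%N; 0%N; 1753%N; 0%N; 0%N; 2010%N; 0%N; 858%N; 223%N; 0%N; 922%N; 0%N; 0%N; 986%N; 1229%N; 0%N; 0%N; 1486%N; 0%N; 3259%N; 1739%N; 0%N; 0%N; 1004%N; 751%N; 0%N; 623%N; 0%N; 0%N; 1847%N; 1789%N; 0%N; 0%N; 1725%N; 0%N; 1597%N; 1661%N;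 0%N; 765%N; 0%N; 0%N; 1022%N; 0%N; 894%N; 830%N; 0%N; 0%N; 2028%N; 1775%N; 0%N; 1647%N; 0%N; 0%N; 4058%N; 0%N; 205%N; 462%N; 0%N; 1939%N; 0%N; 0%N; 715%N; 1183%N; 0%N; 0%N; 1247%N; 0%N; 1753%N; 2010%N; 0%N; 858%N; 0%N; 0%N; 223%N; 0%N; 2671%N; 986%N; 0%N; 0%N; 1229%N; 1486%N; 0%N; 3259%N; 0%N; 0%N; 1739%N; 1004%N; 0%N; 0%N; 751%N; 0%N; 623%N; 1847%N; 0%N; 0%N; 1789%N; 1725%N; 0%N; 1597%N; 0%N; 0%N; 1661%N; 0%N; 765%N; 1022%N; 0%N; 894%N; 0%N; 0%N; 4051%N; 2028%N; 0%N; 0%N; 1775%N; 0%N; 1647%N; 4058%N; 0%N; 0%N; 399%N; 463%N; 0%N; 969%N; 0%N; 0%N; 2002%N; 1182%N; 0%N; 0%N; 1246%N; 0%N; 1947%N; 2011%N; 0%N; 477%N; 0%N; 0%N; 795%N; 0%N; 923%N; 987%N; 0%N; 0%N; 1423%N; 1487%N; 0%N; 1993%N; 0%N; 0%N; 3322%N; 1005%N; 0%N; 0%N; 941%N; 0%N; 813%N; 877%N; 0%N; 0%N; 1788%N; 1724%N; 0%N; 1596%N; 0%N; 0%N; 1855%N; 0%N; 959%N; 1023%N; 0%N; 895%N; 0%N; 0%N; 831%N; 2029%N; 0%N; 0%N; 1965%N; 0%N; 1837%N; 1901%N; 0%N; 399%N; 0%N; 0%N; 463%N; 0%N; 969%N;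 2002%N; 0%N; 0%N; 1501%N; 1246%N; 0%N; 1947%N; 0%N; 0%N; 2011%N; 0%N; 477%N; 795%N; 0%N; 923%N; 0%N; 0%N; 987%N; 1423%N; 0%N; 0%N; 1487%N; 0%N; 1993%N; 3322%N; 0%N; 0%N; 1005%N; 941%N; 0%N; 813%N; 0%N; 0%N; 877%N; 1788%N; 0%N; 0%N; 2047%N; 0%N; 1919%N; 1855%N; 0%N; 959%N; 0%N; 0%N; 1023%N; 0%N; 895%N; 831%N; 0%N; 0%N; 2029%N; 1965%N; 0%N; 1837%N; 0%N; 0%N; 1901%N; 4%N; 0%N; 0%N; 706%N; 0%N; 196%N; 132%N; 0%N; 0%N; 1939%N; 715%N; 0%N; 205%N; 0%N; 0%N; 462%N; 0%N; 915%N; 979%N; 0%N; 150%N; 0%N; 0%N; 214%N; 922%N; 0%N; 0%N; 986%N; 0%N; 3052%N; 223%N; 0%N; 0%N; 614%N; 550%N; 0%N; 678%N; 0%N; 0%N; 742%N; 623%N; 0%N; 0%N; 1847%N; 0%N; 1004%N; 751%N; 0%N; 564%N; 0%N; 0%N; 823%N; 0%N; 756%N; 692%N; 0%N; 0%N; 894%N; 830%N; 0%N; 765%N; 0%N; 0%N; 1022%N; 0%N; 961%N; 706%N; 0%N; 196%N; 0%N; 0%N; 455%N; 1939%N; 0%N; 0%N; 715%N; 0%N; 205%N; 462%N; 0%N; 915%N; 0%N; 0%N; 979%N; 0%N; 469%N; 214%N; 0%N; 0%N; 2671%N; 986%N; 0%N; 3052%N; 0%N; 0%N; 223%N; 614%N;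 0%N; 0%N; 869%N; 0%N; 997%N; 742%N; 0%N; 0%N; 623%N; 1847%N; 0%N; 1004%N; 0%N; 0%N; 751%N; 0%N; 887%N; 823%N; 0%N; 756%N; 0%N; 0%N; 1015%N; 894%N; 0%N; 0%N; 4051%N; 0%N; 765%N; 1022%N; 0%N; 0%N; 1947%N; 707%N; 0%N; 197%N; 0%N; 0%N; 454%N; 969%N; 0%N; 0%N; 2002%N; 0%N; 399%N; 463%N; 0%N; 914%N; 0%N; 0%N; 978%N; 0%N; 1423%N; 215%N; 0%N; 0%N; 923%N; 987%N; 0%N; 477%N; 0%N; 0%N; 2989%N; 615%N; 0%N; 0%N; 1855%N; 0%N; 996%N; 743%N; 0%N; 0%N; 813%N; 877%N; 0%N; 1005%N; 0%N; 0%N; 941%N; 0%N; 886%N; 822%N; 0%N; 757%N; 0%N; 0%N; 1014%N; 895%N; 0%N; 0%N; 831%N; 0%N; 959%N; 1023%N; 0%N; 1947%N; 0%N; 0%N; 707%N; 0%N; 197%N; 454%N; 0%N; 0%N; 969%N; 2002%N; 0%N; 399%N; 0%N; 0%N; 463%N; 0%N; 1993%N; 978%N; 0%N; 1423%N; 0%N; 0%N; 215%N; 923%N; 0%N; 0%N; 987%N; 0%N; 477%N; 2989%N; 0%N; 0%N; 615%N; 1855%N; 0%N; 996%N; 0%N; 0%N; 743%N; 813%N; 0%N; 0%N; 877%N; 0%N; 1005%N; 941%N; 0%N; 886%N; 0%N; 0%N; 1901%N; 0%N; 757%N; 1014%N; 0%N; 0%N; 895%N; 831%N; 0%N; 959%N;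 0%N; 0%N; 1023%N; 0%N; 1939%N; 715%N; 0%N; 205%N; 0%N; 0%N; 462%N; 1753%N; 0%N; 0%N; 2010%N; 0%N; 1183%N; 1247%N; 0%N; 922%N; 0%N; 0%N; 986%N; 0%N; 3052%N; 223%N; 0%N; 0%N; 3259%N; 1739%N; 0%N; 1229%N; 0%N; 0%N; 1486%N; 623%N; 0%N; 0%N; 1847%N; 0%N; 1004%N; 751%N; 0%N; 0%N; 1597%N; 1661%N; 0%N; 1789%N; 0%N; 0%N; 1725%N; 0%N; 894%N; 830%N; 0%N; 765%N; 0%N; 0%N; 1022%N; 1647%N; 0%N; 0%N; 4058%N; 0%N; 2028%N; 1775%N; 0%N; 1939%N; 0%N; 0%N; 715%N; 0%N; 205%N; 462%N; 0%N; 0%N; 1753%N; 2010%N; 0%N; 1183%N; 0%N; 0%N; 1247%N; 0%N; 2671%N; 986%N; 0%N; 3052%N; 0%N; 0%N; 223%N; 3259%N; 0%N; 0%N; 1739%N; 0%N; 1229%N; 1486%N; 0%N; 0%N; 623%N; 1847%N; 0%N; 1004%N; 0%N; 0%N; 751%N; 1597%N; 0%N; 0%N; 1661%N; 0%N; 1789%N; 1725%N; 0%N; 894%N; 0%N; 0%N; 4051%N; 0%N; 765%N; 1022%N; 0%N; 0%N; 1647%N; 4058%N; 0%N; 2028%N; 0%N; 0%N; 1775%N; 969%N; 0%N; 0%N; 2002%N; 0%N; 399%N; 463%N; 0%N; 0%N; 1947%N; 2011%N; 0%N; 1182%N; 0%N; 0%N; 1246%N; 0%N; 923%N; 987%N;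 0%N; 477%N; 0%N; 0%N; 2989%N; 1993%N; 0%N; 0%N; 3322%N; 0%N; 1423%N; 1487%N; 0%N; 0%N; 813%N; 877%N; 0%N; 1005%N; 0%N; 0%N; 941%N; 1596%N; 0%N; 0%N; 1855%N; 0%N; 1788%N; 1724%N; 0%N; 895%N; 0%N; 0%N; 831%N; 0%N; 959%N; 1023%N; 0%N; 0%N; 1837%N; 1901%N; 0%N; 2029%N; 0%N; 0%N; 1965%N; 0%N; 969%N; 2002%N; 0%N; 399%N; 0%N; 0%N; 463%N; 1947%N; 0%N; 0%N; 2011%N; 0%N; 1501%N; 1246%N; 0%N; 923%N; 0%N; 0%N; 987%N; 0%N; 477%N; 2989%N; 0%N; 0%N; 1993%N; 3322%N; 0%N; 1423%N; 0%N; 0%N; 1487%N; 813%N; 0%N; 0%N; 877%N; 0%N; 1005%N; 941%N; 0%N; 0%N; 1919%N; 1855%N; 0%N; 1788%N; 0%N; 0%N; 2047%N; 0%N; 895%N; 831%N; 0%N; 959%N; 0%N; 0%N; 1023%N; 1837%N; 0%N; 0%N; 1901%N; 0%N; 2029%N; 1965%N; 0%N; 0%N; 228%N; 164%N; 0%N; 36%N; 0%N; 0%N; 738%N; 237%N; 0%N; 0%N; 494%N; 0%N; 1971%N; 747%N; 0%N; 182%N; 0%N; 0%N; 246%N; 0%N; 947%N; 1011%N; 0%N; 0%N; 890%N; 255%N; 0%N; 954%N; 0%N; 0%N; 1018%N; 0%N; 0%N; 0%N; 2294%N; 0%N; 2166%N; 2102%N; 0%N; 0%N; 2556%N; 2303%N;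 0%N; 2175%N; 0%N; 0%N; 3066%N; 0%N; 2276%N; 2212%N; 0%N; 2084%N; 0%N; 0%N; 2786%N; 2285%N; 0%N; 0%N; 2542%N; 0%N; 3190%N; 2795%N; 0%N; 228%N; 0%N; 0%N; 487%N; 0%N; 993%N; 738%N; 0%N; 0%N; 237%N; 494%N; 0%N; 1971%N; 0%N; 0%N; 747%N; 0%N; 501%N; 246%N; 0%N; 947%N; 0%N; 0%N; 1011%N; 890%N; 0%N; 0%N; 255%N; 0%N; 3537%N; 1018%N; 0%N; 0%N; 2549%N; 2294%N; 0%N; 2166%N; 0%N; 0%N; 2421%N; 2556%N; 0%N; 0%N; 2303%N; 0%N; 2175%N; 3066%N; 0%N; 2276%N; 0%N; 0%N; 2535%N; 0%N; 3041%N; 2786%N; 0%N; 0%N; 2285%N; 2542%N; 0%N; 3190%N; 0%N; 0%N; 2795%N; 229%N; 0%N; 0%N; 486%N; 0%N; 1979%N; 739%N; 0%N; 0%N; 431%N; 495%N; 0%N; 1001%N; 0%N; 0%N; 2034%N; 0%N; 882%N; 247%N; 0%N; 946%N; 0%N; 0%N; 1010%N; 509%N; 0%N; 0%N; 827%N; 0%N; 955%N; 1019%N; 0%N; 0%N; 2548%N; 2295%N; 0%N; 2167%N; 0%N; 0%N; 3058%N; 2557%N; 0%N; 0%N; 2493%N; 0%N; 2365%N; 2429%N; 0%N; 2277%N; 0%N; 0%N; 2534%N; 0%N; 3198%N; 2787%N; 0%N; 0%N; 2479%N; 2543%N; 0%N; 3049%N; 0%N; 0%N; 4082%N; 0%N;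 229%N; 486%N; 0%N; 1979%N; 0%N; 0%N; 739%N; 431%N; 0%N; 0%N; 495%N; 0%N; 1001%N; 2034%N; 0%N; 882%N; 0%N; 0%N; 247%N; 0%N; 2025%N; 1010%N; 0%N; 0%N; 509%N; 827%N; 0%N; 955%N; 0%N; 0%N; 1019%N; 2548%N; 0%N; 0%N; 2295%N; 0%N; 2167%N; 3058%N; 0%N; 0%N; 2557%N; 2493%N; 0%N; 2365%N; 0%N; 0%N; 2429%N; 0%N; 2277%N; 2534%N; 0%N; 3198%N; 0%N; 0%N; 2787%N; 2479%N; 0%N; 0%N; 2543%N; 0%N; 3049%N; 4082%N; 0%N; 237%N; 0%N; 0%N; 494%N; 0%N; 1971%N; 747%N; 0%N; 0%N; 1215%N; 1279%N; 0%N; 1785%N; 0%N; 0%N; 2042%N; 0%N; 890%N; 255%N; 0%N; 954%N; 0%N; 0%N; 1018%N; 1261%N; 0%N; 0%N; 1518%N; 0%N; 3227%N; 1771%N; 0%N; 0%N; 2556%N; 2303%N; 0%N; 2175%N; 0%N; 0%N; 3066%N; 3309%N; 0%N; 0%N; 3245%N; 0%N; 3117%N; 3181%N; 0%N; 2285%N; 0%N; 0%N; 2542%N; 0%N; 3190%N; 2795%N; 0%N; 0%N; 3263%N; 3327%N; 0%N; 3199%N; 0%N; 0%N; 3135%N; 0%N; 237%N; 494%N; 0%N; 1971%N; 0%N; 0%N; 747%N; 1215%N; 0%N; 0%N; 1279%N; 0%N; 1785%N; 2042%N; 0%N; 890%N; 0%N; 0%N; 255%N; 0%N; 3537%N; 1018%N;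 0%N; 0%N; 1261%N; 1518%N; 0%N; 3227%N; 0%N; 0%N; 1771%N; 2556%N; 0%N; 0%N; 2303%N; 0%N; 2175%N; 3066%N; 0%N; 0%N; 3309%N; 3245%N; 0%N; 3117%N; 0%N; 0%N; 3181%N; 0%N; 2285%N; 2542%N; 0%N; 3190%N; 0%N; 0%N; 2795%N; 3263%N; 0%N; 0%N; 3327%N; 0%N; 3199%N; 3135%N; 0%N; 0%N; 431%N; 495%N; 0%N; 1001%N; 0%N; 0%N; 2034%N; 1214%N; 0%N; 0%N; 1278%N; 0%N; 1979%N; 2043%N; 0%N; 509%N; 0%N; 0%N; 827%N; 0%N; 955%N; 1019%N; 0%N; 0%N; 1455%N; 1519%N; 0%N; 2025%N; 0%N; 0%N; 3290%N; 2557%N; 0%N; 0%N; 2493%N; 0%N; 2365%N; 2429%N; 0%N; 0%N; 3308%N; 3244%N; 0%N; 3116%N; 0%N; 0%N; 3375%N; 0%N; 2479%N; 2543%N; 0%N; 3049%N; 0%N; 0%N; 4082%N; 3262%N; 0%N; 0%N; 3326%N; 0%N; 3198%N; 3134%N; 0%N; 431%N; 0%N; 0%N; 495%N; 0%N; 1001%N; 2034%N; 0%N; 0%N; 1533%N; 1278%N; 0%N; 1979%N; 0%N; 0%N; 2043%N; 0%N; 509%N; 827%N; 0%N; 955%N; 0%N; 0%N; 1019%N; 1455%N; 0%N; 0%N; 1519%N; 0%N; 2025%N; 3290%N; 0%N; 0%N; 2557%N; 2493%N; 0%N; 2365%N; 0%N; 0%N; 2429%N; 3308%N; 0%N; 0%N;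 3567%N; 0%N; 3439%N; 3375%N; 0%N; 2479%N; 0%N; 0%N; 2543%N; 0%N; 3049%N; 4082%N; 0%N; 0%N; 3581%N; 3326%N; 0%N; 3198%N; 0%N; 0%N; 3453%N; 36%N; 0%N; 0%N; 738%N; 0%N; 228%N; 164%N; 0%N; 0%N; 1971%N; 747%N; 0%N; 237%N; 0%N; 0%N; 494%N; 0%N; 947%N; 1011%N; 0%N; 182%N; 0%N; 0%N; 246%N; 954%N; 0%N; 0%N; 1018%N; 0%N; 3796%N; 255%N; 0%N; 0%N; 2166%N; 2102%N; 0%N; 2230%N; 0%N; 0%N; 2294%N; 2175%N; 0%N; 0%N; 3066%N; 0%N; 2556%N; 2303%N; 0%N; 2084%N; 0%N; 0%N; 2786%N; 0%N; 2276%N; 2212%N; 0%N; 0%N; 3190%N; 2795%N; 0%N; 2285%N; 0%N; 0%N; 2542%N; 0%N; 993%N; 738%N; 0%N; 228%N; 0%N; 0%N; 487%N; 1971%N; 0%N; 0%N; 747%N; 0%N; 237%N; 494%N; 0%N; 947%N; 0%N; 0%N; 1011%N; 0%N; 501%N; 246%N; 0%N; 0%N; 3537%N; 1018%N; 0%N; 3796%N; 0%N; 0%N; 255%N; 2166%N; 0%N; 0%N; 2421%N; 0%N; 2549%N; 2294%N; 0%N; 0%N; 2175%N; 3066%N; 0%N; 2556%N; 0%N; 0%N; 2303%N; 0%N; 3041%N; 2786%N; 0%N; 2276%N; 0%N; 0%N; 2535%N; 3190%N; 0%N; 0%N; 2795%N; 0%N; 2285%N; 2542%N; 0%N; 0%N;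 1979%N; 739%N; 0%N; 229%N; 0%N; 0%N; 486%N; 1001%N; 0%N; 0%N; 2034%N; 0%N; 431%N; 495%N; 0%N; 946%N; 0%N; 0%N; 1010%N; 0%N; 1455%N; 247%N; 0%N; 0%N; 955%N; 1019%N; 0%N; 509%N; 0%N; 0%N; 4054%N; 2167%N; 0%N; 0%N; 3058%N; 0%N; 2548%N; 2295%N; 0%N; 0%N; 2365%N; 2429%N; 0%N; 2557%N; 0%N; 0%N; 2493%N; 0%N; 3198%N; 2787%N; 0%N; 2277%N; 0%N; 0%N; 2534%N; 3049%N; 0%N; 0%N; 4082%N; 0%N; 2479%N; 2543%N; 0%N; 1979%N; 0%N; 0%N; 739%N; 0%N; 229%N; 486%N; 0%N; 0%N; 1001%N; 2034%N; 0%N; 431%N; 0%N; 0%N; 495%N; 0%N; 2025%N; 1010%N; 0%N; 1455%N; 0%N; 0%N; 247%N; 955%N; 0%N; 0%N; 1019%N; 0%N; 509%N; 4054%N; 0%N; 0%N; 2167%N; 3058%N; 0%N; 2548%N; 0%N; 0%N; 2295%N; 2365%N; 0%N; 0%N; 2429%N; 0%N; 2557%N; 2493%N; 0%N; 3198%N; 0%N; 0%N; 2787%N; 0%N; 2277%N; 2534%N; 0%N; 0%N; 3049%N; 4082%N; 0%N; 2479%N; 0%N; 0%N; 2543%N; 0%N; 1971%N; 747%N; 0%N; 237%N; 0%N; 0%N; 494%N; 1785%N; 0%N; 0%N; 2042%N; 0%N; 1215%N; 1279%N; 0%N; 954%N; 0%N; 0%N; 1018%N; 0%N; 3796%N; 255%N;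 0%N; 0%N; 3227%N; 1771%N; 0%N; 1261%N; 0%N; 0%N; 1518%N; 2175%N; 0%N; 0%N; 3066%N; 0%N; 2556%N; 2303%N; 0%N; 0%N; 3117%N; 3181%N; 0%N; 3309%N; 0%N; 0%N; 3245%N; 0%N; 3190%N; 2795%N; 0%N; 2285%N; 0%N; 0%N; 2542%N; 3199%N; 0%N; 0%N; 3135%N; 0%N; 3263%N; 3327%N; 0%N; 1971%N; 0%N; 0%N; 747%N; 0%N; 237%N; 494%N; 0%N; 0%N; 1785%N; 2042%N; 0%N; 1215%N; 0%N; 0%N; 1279%N; 0%N; 3537%N; 1018%N; 0%N; 3796%N; 0%N; 0%N; 255%N; 3227%N; 0%N; 0%N; 1771%N; 0%N; 1261%N; 1518%N; 0%N; 0%N; 2175%N; 3066%N; 0%N; 2556%N; 0%N; 0%N; 2303%N; 3117%N; 0%N; 0%N; 3181%N; 0%N; 3309%N; 3245%N; 0%N; 3190%N; 0%N; 0%N; 2795%N; 0%N; 2285%N; 2542%N; 0%N; 0%N; 3199%N; 3135%N; 0%N; 3263%N; 0%N; 0%N; 3327%N; 1001%N; 0%N; 0%N; 2034%N; 0%N; 431%N; 495%N; 0%N; 0%N; 1979%N; 2043%N; 0%N; 1214%N; 0%N; 0%N; 1278%N; 0%N; 955%N; 1019%N; 0%N; 509%N; 0%N; 0%N; 4054%N; 2025%N; 0%N; 0%N; 3290%N; 0%N; 1455%N; 1519%N; 0%N; 0%N; 2365%N; 2429%N; 0%N; 2557%N; 0%N; 0%N; 2493%N; 3116%N; 0%N;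 0%N; 3375%N; 0%N; 3308%N; 3244%N; 0%N; 3049%N; 0%N; 0%N; 4082%N; 0%N; 2479%N; 2543%N; 0%N; 0%N; 3198%N; 3134%N; 0%N; 3262%N; 0%N; 0%N; 3326%N; 0%N; 1001%N; 2034%N; 0%N; 431%N; 0%N; 0%N; 495%N; 1979%N; 0%N; 0%N; 2043%N; 0%N; 1533%N; 1278%N; 0%N; 955%N; 0%N; 0%N; 1019%N; 0%N; 509%N; 4054%N; 0%N; 0%N; 2025%N; 3290%N; 0%N; 1455%N; 0%N; 0%N; 1519%N; 2365%N; 0%N; 0%N; 2429%N; 0%N; 2557%N; 2493%N; 0%N; 0%N; 3439%N; 3375%N; 0%N; 3308%N; 0%N; 0%N; 3567%N; 0%N; 3049%N; 4082%N; 0%N; 2479%N; 0%N; 0%N; 2543%N; 3198%N; 0%N; 0%N; 3453%N; 0%N; 3581%N; 3326%N; 0%N; 32%N; 0%N; 0%N; 742%N; 0%N; 614%N; 550%N; 0%N; 0%N; 1004%N; 751%N; 0%N; 623%N; 0%N; 0%N; 1847%N; 0%N; 756%N; 692%N; 0%N; 564%N; 0%N; 0%N; 823%N; 765%N; 0%N; 0%N; 1022%N; 0%N; 894%N; 830%N; 0%N; 0%N; 2162%N; 2098%N; 0%N; 2226%N; 0%N; 0%N; 2290%N; 2171%N; 0%N; 0%N; 3070%N; 0%N; 2942%N; 2299%N; 0%N; 2080%N; 0%N; 0%N; 2790%N; 0%N; 2662%N; 2598%N; 0%N; 0%N; 3052%N; 2799%N; 0%N; 2671%N; 0%N; 0%N;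 3314%N; 0%N; 997%N; 742%N; 0%N; 614%N; 0%N; 0%N; 869%N; 1004%N; 0%N; 0%N; 751%N; 0%N; 623%N; 1847%N; 0%N; 756%N; 0%N; 0%N; 1015%N; 0%N; 887%N; 823%N; 0%N; 0%N; 765%N; 1022%N; 0%N; 894%N; 0%N; 0%N; 4051%N; 2162%N; 0%N; 0%N; 2417%N; 0%N; 2545%N; 2290%N; 0%N; 0%N; 2171%N; 3070%N; 0%N; 2942%N; 0%N; 0%N; 2299%N; 0%N; 3045%N; 2790%N; 0%N; 2662%N; 0%N; 0%N; 2917%N; 3052%N; 0%N; 0%N; 2799%N; 0%N; 2671%N; 3314%N; 0%N; 0%N; 996%N; 743%N; 0%N; 615%N; 0%N; 0%N; 1855%N; 1005%N; 0%N; 0%N; 941%N; 0%N; 813%N; 877%N; 0%N; 757%N; 0%N; 0%N; 1014%N; 0%N; 886%N; 822%N; 0%N; 0%N; 959%N; 1023%N; 0%N; 895%N; 0%N; 0%N; 831%N; 2163%N; 0%N; 0%N; 3062%N; 0%N; 2934%N; 2291%N; 0%N; 0%N; 2361%N; 2425%N; 0%N; 2553%N; 0%N; 0%N; 2879%N; 0%N; 3044%N; 2791%N; 0%N; 2663%N; 0%N; 0%N; 3322%N; 3053%N; 0%N; 0%N; 2989%N; 0%N; 2861%N; 2925%N; 0%N; 996%N; 0%N; 0%N; 743%N; 0%N; 615%N; 1855%N; 0%N; 0%N; 1005%N; 941%N; 0%N; 813%N; 0%N; 0%N; 877%N; 0%N; 757%N; 1014%N; 0%N; 886%N; 0%N;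 0%N; 1901%N; 959%N; 0%N; 0%N; 1023%N; 0%N; 895%N; 831%N; 0%N; 0%N; 2163%N; 3062%N; 0%N; 2934%N; 0%N; 0%N; 2291%N; 2361%N; 0%N; 0%N; 2425%N; 0%N; 2553%N; 2879%N; 0%N; 3044%N; 0%N; 0%N; 2791%N; 0%N; 2663%N; 3322%N; 0%N; 0%N; 3053%N; 2989%N; 0%N; 2861%N; 0%N; 0%N; 2925%N; 0%N; 1004%N; 751%N; 0%N; 623%N; 0%N; 0%N; 1847%N; 1789%N; 0%N; 0%N; 1725%N; 0%N; 1597%N; 1661%N; 0%N; 765%N; 0%N; 0%N; 1022%N; 0%N; 894%N; 830%N; 0%N; 0%N; 2028%N; 1775%N; 0%N; 1647%N; 0%N; 0%N; 4058%N; 2171%N; 0%N; 0%N; 3070%N; 0%N; 2942%N; 2299%N; 0%N; 0%N; 3113%N; 3177%N; 0%N; 3305%N; 0%N; 0%N; 3562%N; 0%N; 3052%N; 2799%N; 0%N; 2671%N; 0%N; 0%N; 3314%N; 3195%N; 0%N; 0%N; 3131%N; 0%N; 3259%N; 3323%N; 0%N; 1004%N; 0%N; 0%N; 751%N; 0%N; 623%N; 1847%N; 0%N; 0%N; 1789%N; 1725%N; 0%N; 1597%N; 0%N; 0%N; 1661%N; 0%N; 765%N; 1022%N; 0%N; 894%N; 0%N; 0%N; 4051%N; 2028%N; 0%N; 0%N; 1775%N; 0%N; 1647%N; 4058%N; 0%N; 0%N; 2171%N; 3070%N; 0%N; 2942%N; 0%N; 0%N; 2299%N; 3113%N; 0%N;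 0%N; 3177%N; 0%N; 3305%N; 3562%N; 0%N; 3052%N; 0%N; 0%N; 2799%N; 0%N; 2671%N; 3314%N; 0%N; 0%N; 3195%N; 3131%N; 0%N; 3259%N; 0%N; 0%N; 3323%N; 1005%N; 0%N; 0%N; 941%N; 0%N; 813%N; 877%N; 0%N; 0%N; 1788%N; 1724%N; 0%N; 1596%N; 0%N; 0%N; 1855%N; 0%N; 959%N; 1023%N; 0%N; 895%N; 0%N; 0%N; 831%N; 2029%N; 0%N; 0%N; 1965%N; 0%N; 1837%N; 1901%N; 0%N; 0%N; 2361%N; 2425%N; 0%N; 2553%N; 0%N; 0%N; 2879%N; 3112%N; 0%N; 0%N; 3371%N; 0%N; 3499%N; 3563%N; 0%N; 3053%N; 0%N; 0%N; 2989%N; 0%N; 2861%N; 2925%N; 0%N; 0%N; 3194%N; 3130%N; 0%N; 3258%N; 0%N; 0%N; 3322%N; 0%N; 1005%N; 941%N; 0%N; 813%N; 0%N; 0%N; 877%N; 1788%N; 0%N; 0%N; 2047%N; 0%N; 1919%N; 1855%N; 0%N; 959%N; 0%N; 0%N; 1023%N; 0%N; 895%N; 831%N; 0%N; 0%N; 2029%N; 1965%N; 0%N; 1837%N; 0%N; 0%N; 1901%N; 2361%N; 0%N; 0%N; 2425%N; 0%N; 2553%N; 2879%N; 0%N; 0%N; 3435%N; 3371%N; 0%N; 3499%N; 0%N; 0%N; 3563%N; 0%N; 3053%N; 2989%N; 0%N; 2861%N; 0%N; 0%N; 2925%N; 3194%N; 0%N; 0%N; 3449%N; 0%N; 3577%N;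 3322%N; 0%N; 0%N; 614%N; 550%N; 0%N; 678%N; 0%N; 0%N; 742%N; 623%N; 0%N; 0%N; 1847%N; 0%N; 1004%N; 751%N; 0%N; 564%N; 0%N; 0%N; 823%N; 0%N; 756%N; 692%N; 0%N; 0%N; 894%N; 830%N; 0%N; 765%N; 0%N; 0%N; 1022%N; 2226%N; 0%N; 0%N; 2290%N; 0%N; 2804%N; 2740%N; 0%N; 0%N; 2942%N; 2299%N; 0%N; 2813%N; 0%N; 0%N; 3070%N; 0%N; 2662%N; 2598%N; 0%N; 2726%N; 0%N; 0%N; 2790%N; 2671%N; 0%N; 0%N; 3314%N; 0%N; 3052%N; 2799%N; 0%N; 614%N; 0%N; 0%N; 869%N; 0%N; 997%N; 742%N; 0%N; 0%N; 623%N; 1847%N; 0%N; 1004%N; 0%N; 0%N; 751%N; 0%N; 887%N; 823%N; 0%N; 756%N; 0%N; 0%N; 1015%N; 894%N; 0%N; 0%N; 4051%N; 0%N; 765%N; 1022%N; 0%N; 0%N; 2545%N; 2290%N; 0%N; 2804%N; 0%N; 0%N; 3063%N; 2942%N; 0%N; 0%N; 2299%N; 0%N; 2813%N; 3070%N; 0%N; 2662%N; 0%N; 0%N; 2917%N; 0%N; 3045%N; 2790%N; 0%N; 0%N; 2671%N; 3314%N; 0%N; 3052%N; 0%N; 0%N; 2799%N; 615%N; 0%N; 0%N; 1855%N; 0%N; 996%N; 743%N; 0%N; 0%N; 813%N; 877%N; 0%N; 1005%N; 0%N; 0%N; 941%N; 0%N; 886%N; 822%N; 0%N; 757%N; 0%N;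 0%N; 1014%N; 895%N; 0%N; 0%N; 831%N; 0%N; 959%N; 1023%N; 0%N; 0%N; 2934%N; 2291%N; 0%N; 2805%N; 0%N; 0%N; 3062%N; 2553%N; 0%N; 0%N; 2879%N; 0%N; 3007%N; 3071%N; 0%N; 2663%N; 0%N; 0%N; 3322%N; 0%N; 3044%N; 2791%N; 0%N; 0%N; 2861%N; 2925%N; 0%N; 3053%N; 0%N; 0%N; 2989%N; 0%N; 615%N; 1855%N; 0%N; 996%N; 0%N; 0%N; 743%N; 813%N; 0%N; 0%N; 877%N; 0%N; 1005%N; 941%N; 0%N; 886%N; 0%N; 0%N; 1901%N; 0%N; 757%N; 1014%N; 0%N; 0%N; 895%N; 831%N; 0%N; 959%N; 0%N; 0%N; 1023%N; 2934%N; 0%N; 0%N; 2291%N; 0%N; 2805%N; 3062%N; 0%N; 0%N; 2553%N; 2879%N; 0%N; 3007%N; 0%N; 0%N; 3071%N; 0%N; 2663%N; 3322%N; 0%N; 3044%N; 0%N; 0%N; 2791%N; 2861%N; 0%N; 0%N; 2925%N; 0%N; 3053%N; 2989%N; 0%N; 623%N; 0%N; 0%N; 1847%N; 0%N; 1004%N; 751%N; 0%N; 0%N; 1597%N; 1661%N; 0%N; 1789%N; 0%N; 0%N; 1725%N; 0%N; 894%N; 830%N; 0%N; 765%N; 0%N; 0%N; 1022%N; 1647%N; 0%N; 0%N; 4058%N; 0%N; 2028%N; 1775%N; 0%N; 0%N; 2942%N; 2299%N; 0%N; 2813%N; 0%N; 0%N; 3070%N; 3305%N; 0%N; 0%N;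 3562%N; 0%N; 3759%N; 3823%N; 0%N; 2671%N; 0%N; 0%N; 3314%N; 0%N; 3052%N; 2799%N; 0%N; 0%N; 3259%N; 3323%N; 0%N; 3837%N; 0%N; 0%N; 3773%N; 0%N; 623%N; 1847%N; 0%N; 1004%N; 0%N; 0%N; 751%N; 1597%N; 0%N; 0%N; 1661%N; 0%N; 1789%N; 1725%N; 0%N; 894%N; 0%N; 0%N; 4051%N; 0%N; 765%N; 1022%N; 0%N; 0%N; 1647%N; 4058%N; 0%N; 2028%N; 0%N; 0%N; 1775%N; 2942%N; 0%N; 0%N; 2299%N; 0%N; 2813%N; 3070%N; 0%N; 0%N; 3305%N; 3562%N; 0%N; 3759%N; 0%N; 0%N; 3823%N; 0%N; 2671%N; 3314%N; 0%N; 3052%N; 0%N; 0%N; 2799%N; 3259%N; 0%N; 0%N; 3323%N; 0%N; 3837%N; 3773%N; 0%N; 0%N; 813%N; 877%N; 0%N; 1005%N; 0%N; 0%N; 941%N; 1596%N; 0%N; 0%N; 1855%N; 0%N; 1788%N; 1724%N; 0%N; 895%N; 0%N; 0%N; 831%N; 0%N; 959%N; 1023%N; 0%N; 0%N; 1837%N; 1901%N; 0%N; 2029%N; 0%N; 0%N; 1965%N; 2553%N; 0%N; 0%N; 2879%N; 0%N; 3007%N; 3071%N; 0%N; 0%N; 3499%N; 3563%N; 0%N; 3758%N; 0%N; 0%N; 3822%N; 0%N; 2861%N; 2925%N; 0%N; 3053%N; 0%N; 0%N; 2989%N; 3258%N; 0%N; 0%N; 3322%N; 0%N; 3836%N; 3772%N;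 0%N; 813%N; 0%N; 0%N; 877%N; 0%N; 1005%N; 941%N; 0%N; 0%N; 1919%N; 1855%N; 0%N; 1788%N; 0%N; 0%N; 2047%N; 0%N; 895%N; 831%N; 0%N; 959%N; 0%N; 0%N; 1023%N; 1837%N; 0%N; 0%N; 1901%N; 0%N; 2029%N; 1965%N; 0%N; 0%N; 2553%N; 2879%N; 0%N; 3007%N; 0%N; 0%N; 3071%N; 3499%N; 0%N; 0%N; 3563%N; 0%N; 4077%N; 3822%N; 0%N; 2861%N; 0%N; 0%N; 2925%N; 0%N; 3053%N; 2989%N; 0%N; 0%N; 3577%N; 3322%N; 0%N; 3836%N; 0%N; 0%N; 4095%N].

Definition E (k : nat) : edge := nth k ledges (EH 0 0).

Definition boxidx (e : edge) : option nat :=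
  match e with
  | EH a b => if (0 <=? a) && (a <=? 1) && (0 <=? b) && (b <=? 2) then Some (Z.to_nat (3 * a + b)) else None
  | EV a b => if (0 <=? a) && (a <=? 2) && (0 <=? b) && (b <=? 1) then Some (Z.to_nat (6 + 2 * a + b)) else None
  end.

Definition psi_s (s : list bool) (phi : config) (e : edge) : bool :=
  match boxidx e with Some k => nth k s false | None => phi e end.

Definition crossbits (phi : config) : list bool := map (fun k => phi (E k)) (seq 12 12).

Fixpoint encode (l : list bool) : nat :=
  match l with nil => 0%nat | b :: l' => (Nat.b2n b + 2 * encode l')%nat end.

Definition decode (n : N) : list bool :=
  [N.testbit n 0; N.testbit n 1; N.testbit n 2; N.testbit n 3; N.testbit n 4; N.testbit n 5;
   N.testbit n 6; N.testbit n 7; N.testbit n 8; N.testbit n 9; N.testbit n 10; N.testbit n 11].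

Definition xorl (l : list bool) : bool := fold_right xorb false l.

Definition parity_check (vals : list bool) : bool :=
  forallb (fun l => negb (xorl (map (fun k => nth k vals false) l))) vinc.

Definition vtx_eqb (u w : vtx) : bool := (fst u =? fst w) && (snd u =? snd w).
Definition shareb (e f : edge) : bool :=
  vtx_eqb (fst (ends e)) (fst (ends f)) || vtx_eqb (fst (ends e)) (snd (ends f)) ||
  vtx_eqb (snd (ends e)) (fst (ends f)) || vtx_eqb (snd (ends e)) (snd (ends f)).

Definition nbrs : list (list nat) := ([[3; 6; 8; 12; 18; 19]; [4; 6; 7; 8; 9; 13]; [5; 7; 9; 14; 21; 22]; [0; 8; 10; 15; 19; 20]; [1; 8; 9; 10; 11; 16]; [2; 9; 11; 17; 22; 23]; [0; 1; 7; 12; 13; 18]; [1; 2; 6; 13; 14; 21]; [0; 1; 3; 4; 9; 19]; [1; 2; 4; 5; 8; 22]; [3; 4; 11; 15; 16; 20]; [4; 5; 10; 16; 17; 23]; [0; 6; 18]; [1; 6; 7]; [2; 7; 21]; [3; 10; 20]; [4; 10; 11]; [5; 11; 23]; [0; 6; 12]; [0; 3; 8]; [3; 10; 15]; [2; 7; 14]; [2; 5; 9]; [5; 11; 17]])%nat.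

Definition step (vals m : list bool) : list bool :=
  map (fun j => nth j m false ||
        (nth j vals false && existsb (fun i => nth i m false) (nth j nbrs [])))
      (seq 0 24).
Definition init (st : nat) : list bool := map (fun j => Nat.eqb j st) (seq 0 24).

Definition closure (vals : list bool) (st : nat) : list bool := Nat.iter 24 (step vals) (init st).

Definition conn2 (vals m : list bool) : bool :=
  forallb (fun k => implb (nth k vals false) (nth k m false)) (seq 12 12).

Definition conn_check (vals : list bool) : bool :=
  match find (fun k => nth k vals false) (seq 12 12) with
  | None => true
  | Some st => conn2 vals (closure vals st)
  end.

Definition chk_vals (vals : list bool) : bool := parity_check vals && conn_check vals.

Definition chk_pat (pat : list bool) : bool :=
  implb (negb (xorl pat)) (chk_vals (decode (nth (encode pat) table 0%N) ++ pat)).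

Definition bits12 (n : nat) : list bool :=
  [Nat.testbit n 0; Nat.testbit n 1; Nat.testbit n 2; Nat.testbit n 3; Nat.testbit n 4; Nat.testbit n 5;
   Nat.testbit n 6; Nat.testbit n 7; Nat.testbit n 8; Nat.testbit n 9; Nat.testbit n 10; Nat.testbit n 11].

Lemma all_pats : forallb (fun n => chk_pat (bits12 n)) (seq 0 4096) = true.
Proof. vm_compute. reflexivity. Qed.

Lemma nbrs_ok : forallb (fun j => forallb (fun i => shareb (E i) (E j)) (nth j nbrs [])) (seq 0 24) = true.
Proof. vm_compute. reflexivity. Qed.


Lemma vtx_eqb_eq u w : vtx_eqb u w = true -> u = w.
Proof. destruct u, w; unfold vtx_eqb; simpl; rewrite andb_true_iff, !Z.eqb_eq; intros [-> ->]; auto. Qed.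

Lemma shareb_ok e f : shareb e f = true -> exists v, incident v e /\ incident v f.
Proof.
  unfold shareb, incident. rewrite !orb_true_iff. intros [[[H|H]|H]|H]; apply vtx_eqb_eq in H.
  - exists (fst (ends e)); split; left; auto.
  - exists (fst (ends e)); split; [left|right]; auto.
  - exists (snd (ends e)); split; [right|left]; auto.
  - exists (snd (ends e)); split; right; auto.
Qed.

Lemma nth_map_seq (f : nat -> bool) n j :
  nth j (map f (seq 0 n)) false = true -> (j < n)%nat /\ f j = true.
Proof.
  intros H. destruct (Nat.lt_ge_cases j n).
  - rewrite (nth_indep _ false (f 0%nat)) in H by (rewrite length_map, length_seq; lia).
    rewrite map_nth, seq_nth in H by lia. simpl in H; auto.
  - rewrite nth_overflow in H by (rewrite length_map, length_seq; lia). discriminate.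
Qed.

Section Conn.
Variable psi : config.
Variable vals : list bool.
Hypothesis Hv : forall k, (k < 24)%nat -> psi (E k) = nth k vals false.

Definition Inv (st : nat) (m : list bool) : Prop :=
  forall j, nth j m false = true ->
    clos_refl_trans edge (adj psi) (E st) (E j) /\ psi (E j) = true.

Lemma inv_step st m : Inv st m -> Inv st (step vals m).
Proof.
  intros I j H. unfold step in H. apply nth_map_seq in H as [Hj H].
  apply orb_true_iff in H as [H|H]; [apply I; auto|].
  apply andb_prop in H as [Hvj H]. apply existsb_exists in H as [i [Hi Hm]].
  destruct (I i Hm) as [C Pi].
  assert (Pj : psi (E j) = true) by (rewrite Hv; auto).
  split; auto.
  eapply rt_trans; [exact C|].
  assert (S : shareb (E i) (E j) = true).
  { assert (NB := nbrs_ok). rewrite forallb_forall in NB.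
    specialize (NB j ltac:(apply in_seq; lia)). rewrite forallb_forall in NB. auto. }
  destruct (shareb_ok _ _ S) as [v [V1 V2]].
  apply rt_step; repeat split; auto. exists v; auto.
Qed.

Lemma closure_inv st : (st < 24)%nat -> nth st vals false = true -> Inv st (closure vals st).
Proof.
  intros Hst Fv. unfold closure.
  generalize 24%nat as n. induction n as [|n IH].
  - cbn [Nat.iter]. intros j Hj. unfold init in Hj. apply nth_map_seq in Hj as [_ Hj].
    apply Nat.eqb_eq in Hj. subst j. split; [apply rt_refl|]. rewrite Hv by lia; auto.
  - cbn [Nat.iter]. apply inv_step; auto.
Qed.

Lemma implb_true_l x : implb true x = true -> x = true.
Proof. intros H; exact H. Qed.

Lemma conn_sound : conn_check vals = true -> forall k1 k2, (12 <= k1 < 24)%nat -> (12 <= k2 < 24)%nat ->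
  psi (E k1) = true -> psi (E k2) = true -> clos_refl_trans edge (adj psi) (E k1) (E k2).
Proof.
  unfold conn_check. intros H k1 k2 H1 H2 P1 P2.
  destruct (find (fun k => nth k vals false) (seq 12 12)) as [st|] eqn:F.
  - apply find_some in F as [Fin Fv]. apply in_seq in Fin.
    assert (I := closure_inv st ltac:(lia) Fv).
    unfold conn2 in H. rewrite forallb_forall in H.
    assert (M1 := H k1 ltac:(apply in_seq; lia)). assert (M2 := H k2 ltac:(apply in_seq; lia)).
    rewrite <- Hv in M1, M2 by lia. rewrite P1 in M1. rewrite P2 in M2.
    apply implb_true_l in M1. apply implb_true_l in M2.
    destruct (I k1 M1) as [C1 _]. destruct (I k2 M2) as [C2 _].
    eapply rt_trans; [apply crt_sym; exact C1| exact C2].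
  - assert (Z1 := find_none _ _ F k1 ltac:(apply in_seq; lia)). cbv beta in Z1.
    rewrite <- Hv in Z1 by lia. congruence.
Qed.
End Conn.

Lemma tb0 b n : Nat.testbit (Nat.b2n b + 2 * n) 0 = b.
Proof.
  destruct b; simpl Nat.b2n.
  - replace (1 + 2 * n)%nat with (2 * n + 1)%nat by lia. apply Nat.testbit_odd_0.
  - rewrite Nat.add_0_l. apply Nat.testbit_even_0.
Qed.
Lemma tbS b n i : Nat.testbit (Nat.b2n b + 2 * n) (S i) = Nat.testbit n i.
Proof.
  destruct b; simpl Nat.b2n.
  - replace (1 + 2 * n)%nat with (2 * n + 1)%nat by lia. apply Nat.testbit_odd_succ; lia.
  - rewrite Nat.add_0_l. apply Nat.testbit_even_succ; lia.
Qed.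

Lemma enc_bits l : length l = 12%nat -> bits12 (encode l) = l.
Proof.
  intros H.
  do 12 (destruct l as [|? l]; [discriminate|]). destruct l; [|discriminate].
  unfold bits12. cbn [encode]. repeat rewrite tbS. rewrite !tb0. reflexivity.
Qed.

Lemma enc_lt l : (encode l < 2 ^ length l)%nat.
Proof. induction l as [|b l IH]; simpl; [lia|]. destruct b; simpl; lia. Qed.

Lemma chk_of l : length l = 12%nat -> chk_pat l = true.
Proof.
  intros H. assert (A := all_pats). rewrite forallb_forall in A.
  rewrite <- (enc_bits l H). apply A. apply in_seq.
  assert (B := enc_lt l). rewrite H in B. simpl in B. lia.
Qed.


Lemma vals_ok s phi : length s = 12%nat -> forall k, (k < 24)%nat ->
  psi_s s phi (E k) = nth k (s ++ crossbits phi) false.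
Proof.
  intros Hs.
  do 12 (destruct s as [|? s]; [discriminate|]). destruct s; [|discriminate].
  intros k Hk. do 24 (destruct k as [|k]; [reflexivity|]). lia.
Qed.

Lemma even4 a b c d : negb (xorb a (xorb b (xorb c (xorb d false)))) = true ->
  Nat.Even (Nat.b2n a + Nat.b2n b + Nat.b2n c + Nat.b2n d).
Proof.
  intros H; apply Nat.even_spec; destruct a, b, c, d; simpl in *; auto.
Qed.

Lemma vert_ok s phi : length s = 12%nat -> parity_check (s ++ crossbits phi) = true ->
  forall a b, 0 <= a <= 2 -> 0 <= b <= 2 -> even_at (psi_s s phi) (a, b).
Proof.
  intros Hs H a b Ha Hb.
  do 12 (destruct s as [|? s]; [discriminate|]). destruct s; [|discriminate].
  unfold parity_check in H. rewrite forallb_forall in H.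
  assert (Ea : a = 0 \/ a = 1 \/ a = 2) by lia.
  assert (Eb : b = 0 \/ b = 1 \/ b = 2) by lia.
  destruct Ea as [E1|[E1|E1]]; destruct Eb as [E2|[E2|E2]]; subst a b;
  match goal with |- even_at _ (?a, ?b) =>
    let k := eval compute in (Z.to_nat (3 * a + b)) in
    specialize (H (nth k vinc nil) ltac:(simpl; tauto)) end;
  unfold even_at, deg; simpl in *; apply even4; exact H.
Qed.

Lemma cr_E e : crR 0 0 2 2 e -> exists k, (12 <= k < 24)%nat /\ e = E k.
Proof.
  destruct e as [a b|a b]; unfold crR, insR; simpl; intros H.
  - assert (C : (a = -1 \/ a = 2) /\ (b = 0 \/ b = 1 \/ b = 2)) by lia.
    destruct C as [[E1|E1] [E2|[E2|E2]]]; subst a b;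
    [exists 12%nat|exists 13%nat|exists 14%nat|exists 15%nat|exists 16%nat|exists 17%nat];
    split; (lia || reflexivity).
  - assert (C : (b = -1 \/ b = 2) /\ (a = 0 \/ a = 1 \/ a = 2)) by lia.
    destruct C as [[E1|E1] [E2|[E2|E2]]]; subst a b;
    [exists 18%nat|exists 19%nat|exists 20%nat|exists 21%nat|exists 22%nat|exists 23%nat];
    split; (lia || reflexivity).
Qed.

Lemma out_ok s phi e : ~ boxR 0 0 2 2 e -> psi_s s phi e = phi e.
Proof.
  destruct e as [a b|a b]; unfold psi_s, boxidx; intros H.
  - destruct ((0 <=? a) && (a <=? 1) && (0 <=? b) && (b <=? 2)) eqn:C; auto.
    exfalso; apply H. rewrite !andb_true_iff, !Z.leb_le in C. unfold boxR, insR; simpl; lia.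
  - destruct ((0 <=? a) && (a <=? 2) && (0 <=? b) && (b <=? 1)) eqn:C; auto.
    exfalso; apply H. rewrite !andb_true_iff, !Z.leb_le in C. unfold boxR, insR; simpl; lia.
Qed.

Lemma even_b2n x : Nat.even (Nat.b2n x) = negb x.
Proof. destruct x; reflexivity. Qed.

Lemma eqb_nx a b : Bool.eqb a b = negb (xorb a b).
Proof. destruct a, b; reflexivity. Qed.

Lemma hev phi : Nat.Even (Tc phi 0 0 2 2) -> negb (xorl (crossbits phi)) = true.
Proof.
  intros HT.
apply Nat.even_spec in HT. unfold Tc in HT. simpl in HT.
  rewrite !Nat.even_add, !even_b2n in HT.
  change (Nat.even 0) with true in HT. rewrite !eqb_nx in HT.
  unfold crossbits, xorl, E, ledges. simpl.
  match type of HT with ?x = true => transitivity x; [btauto|exact HT] end. 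
Qed.

Lemma base_s s phi : length s = 12%nat -> parity_check (s ++ crossbits phi) = true ->
  conn_check (s ++ crossbits phi) = true ->
  exists psi : config,
    (forall e, ~ boxR 0 0 2 2 e -> psi e = phi e) /\
    (forall e f, crR 0 0 2 2 e -> crR 0 0 2 2 f ->
                 psi e = true -> psi f = true -> same_contour psi e f) /\
    (forall v, insR 0 0 2 2 v -> even_at psi v).
Proof.
  intros Ls Hp Hcn.
  exists (psi_s s phi). split; [|split].
  - intros e He; apply out_ok; auto.
  - intros e f He Hf Pe Pf. destruct (cr_E e He) as [k1 [Hk1 ->]]. destruct (cr_E f Hf) as [k2 [Hk2 ->]].
    unfold same_contour; repeat split; auto.
    apply (conn_sound (psi_s s phi) (s ++ crossbits phi)); auto.
    intros k Hk; apply vals_ok; auto.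
  - intros [a b] Hv. unfold insR in Hv. simpl in Hv. apply vert_ok; auto; lia.
Qed.

Lemma chk_vals_split v : chk_vals v = true -> parity_check v = true /\ conn_check v = true.
Proof. intros H. unfold chk_vals in H. apply andb_prop in H. exact H. Qed.

Lemma chk_split pat : negb (xorl pat) = true -> chk_pat pat = true ->
  parity_check (decode (nth (encode pat) table 0%N) ++ pat) = true /\
  conn_check (decode (nth (encode pat) table 0%N) ++ pat) = true.
Proof.
  intros H1 H2. unfold chk_pat in H2. rewrite H1 in H2. apply implb_true_l in H2.
  apply chk_vals_split. exact H2.
Qed.

Lemma len_dec n : length (decode n) = 12%nat.
Proof. reflexivity. Qed.

Lemma len_cb phi : length (crossbits phi) = 12%nat.
Proof. reflexivity. Qed.

Lemma base00 : GoodR 0 0 2 2.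
Proof.
  intros phi HT.
  destruct (chk_split (crossbits phi) (hev phi HT) (chk_of (crossbits phi) (len_cb phi))) as [Hp Hcn].
  exact (base_s _ phi (len_dec _) Hp Hcn).
Qed.


Lemma good_all : forall p q A0 B0, (2 <= p)%nat -> (2 <= q)%nat -> GoodR A0 B0 p q.
Proof.
  assert (Base : forall A0 B0, GoodR A0 B0 2 2).
  { intros A0 B0. rewrite <- (Z.add_0_l A0), <- (Z.add_0_l B0). apply good_sh, base00. }
  assert (Rows : forall k A0 B0, GoodR A0 B0 2 (2 + k)).
  { induction k as [|k IH]; intros A0 B0; [apply Base|].
    assert (G := IH A0 B0). apply good_tr in G. apply peel_col in G; [|lia|lia].
    apply good_tr in G. replace (2 + S k)%nat with (S (2 + k)) by lia. exact G. }
  assert (Cols : forall k q A0 B0, (2 <= q)%nat -> GoodR A0 B0 (2 + k) q).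
  { induction k as [|k IH]; intros q A0 B0 Hq.
    - replace q with (2 + (q - 2))%nat by lia. apply Rows.
    - replace (2 + S k)%nat with (S (2 + k)) by lia. apply peel_col; auto; lia. }
  intros p q A0 B0 Hp Hq. replace p with (2 + (p - 2))%nat by lia. apply Cols; auto.
Qed.

Fixpoint zr (lo : Z) (n : nat) : list Z := match n with O => nil | S n' => lo :: zr (lo + 1) n' end.

Lemma in_zr z lo n : In z (zr lo n) <-> lo <= z < lo + Z.of_nat n.
Proof.
  revert lo; induction n as [|n IH]; intros lo; simpl; [split; [tauto|lia]|].
  rewrite IH. split; [intros [H|H]; lia|]. intros H. destruct (Z.eq_dec lo z); [left; auto|right; lia].
Qed.

Lemma nodup_map_zr (g : Z -> edge) lo n : (forall x y, g x = g y -> x = y) -> NoDup (map g (zr lo n)).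
Proof.
  intros Hg. revert lo; induction n as [|n IH]; intros lo; simpl; constructor; auto.
  rewrite in_map_iff. intros [x [E Hx]]. apply Hg in E. subst x. apply in_zr in Hx. lia.
Qed.

Lemma filt_zsum (f : edge -> bool) g lo n :
  length (filter f (map g (zr lo n))) = zsum (fun z => Nat.b2n (f (g z))) lo n.
Proof.
  revert lo; induction n as [|n IH]; intros lo; simpl; auto.
  destruct (f (g lo)); simpl; rewrite IH; auto.
Qed.

Section Enum.
Variables (A0 B0 : Z) (p q : nat).
Definition cl : list edge :=
  map (fun b => EH (A0 - 1) b) (zr B0 (S q)) ++
  map (fun b => EH (A0 + Z.of_nat p) b) (zr B0 (S q)) ++
  map (fun a => EV a (B0 - 1)) (zr A0 (S p)) ++
  map (fun a => EV a (B0 + Z.of_nat q)) (zr A0 (S p)).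

Lemma in_cl e : In e cl <-> crR A0 B0 p q e.
Proof.
  unfold cl. rewrite !in_app_iff, !in_map_iff. split.
  - intros [[x [E Hx]]|[[x [E Hx]]|[[x [E Hx]]|[x [E Hx]]]]]; apply in_zr in Hx; subst e;
      unfold crR, insR; simpl; lia.
  - destruct e as [a b|a b]; intros H; unfold crR, insR in H; simpl in H.
    + assert (C : (a = A0 - 1 \/ a = A0 + Z.of_nat p) /\ B0 <= b <= B0 + Z.of_nat q) by lia.
      destruct C as [[Ha|Ha] Hb]; subst a; [left|right; left]; exists b; split; auto; apply in_zr; lia.
    + assert (C : (b = B0 - 1 \/ b = B0 + Z.of_nat q) /\ A0 <= a <= A0 + Z.of_nat p) by lia.
      destruct C as [[Hb|Hb] Ha]; subst b; [right; right; left|right; right; right];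
        exists a; split; auto; apply in_zr; lia.
Qed.

Ltac ndm := apply nodup_map_zr; intros x y E; inversion E; auto.
Ltac disj := intros e H1 H2; apply in_map_iff in H1 as [x [E1 Hx]]; apply in_zr in Hx; subst e;
  rewrite ?in_app_iff, ?in_map_iff in H2; repeat (destruct H2 as [H2|H2]);
  destruct H2 as [y [E2 Hy]]; apply in_zr in Hy; inversion E2; lia.

Lemma nodup_cl : NoDup cl.
Proof.
  unfold cl.
  apply NoDup_app; [ndm | apply NoDup_app; [ndm | apply NoDup_app; [ndm | ndm | disj] | disj] | disj].
Qed.

Lemma len_cl (phi : config) : length (filter (fun e => phi e) cl) = Tc phi A0 B0 p q.
Proof.
  unfold cl, Tc. rewrite !filter_app, !length_app, !filt_zsum. lia.
Qed.
End Enum.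

Lemma cols_len k : snd (cols k) = fst (cols k) + Z.of_nat k.
Proof.
  induction k as [|k IH]; simpl; [reflexivity|].
  destruct (cols k) as [lo hi]; simpl in *. destruct (Nat.odd (S k)); simpl; lia.
Qed.
Lemma rows_len k : snd (rows k) = fst (rows k) + Z.of_nat k.
Proof.
  induction k as [|k IH]; simpl; [reflexivity|].
  destruct (rows k) as [lo hi]; simpl in *. destruct (Nat.odd (S k)); simpl; lia.
Qed.

Theorem lemma4p2 (M N : nat) (phi : config) :
  (3 <= M)%nat -> (3 <= N)%nat ->
  contour_config phi ->
  (* the boundary crosses present edges an even number of times *)
  (exists l : list edge,
      NoDup l /\
      (forall e, In e l <-> (crosses M N e /\ phi e = true)) /\
      Nat.Even (length l)) ->
  exists psi : config,
    (forall e, ~ box_edge M N e -> psi e = phi e) /\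
    (forall e f, crosses M N e -> crosses M N f ->
                 psi e = true -> psi f = true -> same_contour psi e f) /\
    (forall v, inside M N v -> even_at psi v).
Proof.
  intros HM HN _ [l [Hnd [Hl Hev]]].
  set (A0 := fst (cols (N - 1))). set (B0 := fst (rows (M - 1))).
  assert (Ins : forall v, inside M N v <-> insR A0 B0 (N - 1) (M - 1) v).
  { intros [a b]. unfold inside, insR, A0, B0. rewrite cols_len, rows_len. tauto. }
  assert (Box : forall e, box_edge M N e <-> boxR A0 B0 (N - 1) (M - 1) e).
  { intros e. unfold box_edge, boxR. rewrite !Ins. tauto. }
  assert (Cr : forall e, crosses M N e <-> crR A0 B0 (N - 1) (M - 1) e).
  { intros e. unfold crosses, crR. rewrite !Ins. tauto. }
  assert (HT : Nat.Even (Tc phi A0 B0 (N - 1) (M - 1))).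
  { rewrite <- len_cl.
    assert (E : length l = length (filter (fun e => phi e) (cl A0 B0 (N - 1) (M - 1)))).
    { apply Nat.le_antisymm; apply NoDup_incl_length; auto.
      - intros e He. apply Hl in He as [He1 He2]. apply filter_In. split; auto.
        apply in_cl, Cr; auto.
      - apply NoDup_filter, nodup_cl.
      - intros e He. apply filter_In in He as [He1 He2]. apply Hl. split; auto.
        apply Cr, in_cl; auto. }
    rewrite <- E; auto. }
  destruct (good_all (N - 1) (M - 1) A0 B0 ltac:(lia) ltac:(lia) phi HT) as [psi [H1 [H2 H3]]].
  exists psi. split; [|split].
  - intros e He. apply H1. rewrite <- Box. auto.
  - intros e f He Hf. apply H2; apply Cr; auto.
  - intros v Hv. apply H3. apply Ins; auto.
Qed.
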